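(* Let $n\ge3$, $k\ge2$ and $-(n-2)<q<0$. Then the operator \[ T_0=\frac{d^2}{ds^2}+(n-2)\frac{\dot\phi(s)}{\phi(s)}\frac{d}{ds}+\frac{n(n-1)}{\phi(s)^{2n-2}} \] is an isomorphism (bounded, bijective, with bounded inverse) from $\mathscr{C}^k_q(\mathbb{R})$ onto $\mathscr{C}^{k-2}_q(\mathbb{R})$.
   Context: $\phi(s)=(\cosh((n-1)s))^{1/(n-1)}$ and $\dot\phi=d\phi/ds$. For an integer $k\ge0$ and $q\in\mathbb{R}$, $\mathscr{C}^k_q(\mathbb{R})$ is the Banach space of $C^k$ functions $f:\mathbb{R}\to\mathbb{R}$ with finite norm $\|f\|_{\mathscr{C}^k_q}=\sum_{a=0}^k\sup_{s\in\mathbb{R}}|f^{(a)}(s)|\,\phi(s)^{-q}$. *)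

(* Defs.v *)
From Stdlib Require Import Reals Lra Lia ClassicalEpsilon.
Open Scope R_scope.

Definition phi (n : nat) (s : R) : R :=
  Rpower (cosh ((INR n - 1) * s)) (1 / (INR n - 1)).

Definition Ck_tower (k : nat) (f : R -> R) (D : nat -> R -> R) : Prop :=
  (forall s, D 0%nat s = f s) /\
  (forall a, (a < k)%nat -> forall s, derivable_pt_lim (D a) s (D (S a) s)) /\
  continuity (D k).

Definition wval (n : nat) (q : R) (D : nat -> R -> R) (a : nat) (s : R) : R :=
  Rabs (D a s) * Rpower (phi n s) (- q).

(* supremum of a set of reals (0 if it has no least upper bound) *)
Definition Rsup (E : R -> Prop) : R :=
  match excluded_middle_informative (exists l, is_lub E l) with
  | left H => proj1_sig (constructive_indefinite_description _ H)
  | right _ => 0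
  end.

Definition finite_wnorm (n k : nat) (q : R) (D : nat -> R -> R) : Prop :=
  forall a, (a <= k)%nat -> exists M, forall s, wval n q D a s <= M.

Definition wnorm (n k : nat) (q : R) (D : nat -> R -> R) : R :=
  sum_f_R0 (fun a => Rsup (fun y => exists s, y = wval n q D a s)) k.

Definition in_Ckq (n k : nat) (q : R) (f : R -> R) (D : nat -> R -> R) : Prop :=
  Ck_tower k f D /\ finite_wnorm n k q D.

Definition T0 (n : nat) (phid : R -> R) (D : nat -> R -> R) (s : R) : R :=
  D 2%nat s + (INR n - 2) * (phid s / phi n s) * D 1%nat s
  + INR n * (INR n - 1) / (phi n s ^ (2 * n - 2)) * D 0%nat s.

(* Main.v *)
Require Import Defs.
From Stdlib Require Import Reals Lra Lia ClassicalEpsilon FunctionalExtensionality.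
From Coquelicot Require Import Coquelicot.
Open Scope R_scope.

Lemma exp_opp_mul x : exp x * exp (- x) = 1.
Proof. rewrite <- exp_plus. replace (x + - x) with 0 by ring. apply exp_0. Qed.

Lemma cosh_pos x : 0 < cosh x.
Proof. unfold cosh. pose proof (exp_pos x). pose proof (exp_pos (-x)). lra. Qed.

Lemma cosh_sinh x : cosh x ^ 2 - sinh x ^ 2 = 1.
Proof. unfold cosh, sinh. pose proof (exp_opp_mul x). nra. Qed.

Lemma cosh_ge1 x : 1 <= cosh x.
Proof. pose proof (cosh_sinh x). pose proof (cosh_pos x). nra. Qed.

Lemma cosh_opp x : cosh (- x) = cosh x.
Proof. unfold cosh. rewrite Ropp_involutive. lra. Qed.

Lemma sinh_opp x : sinh (- x) = - sinh x.
Proof. unfold sinh. rewrite Ropp_involutive. lra. Qed.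

Lemma cosh_le_exp x : cosh x <= exp (Rabs x).
Proof.
  unfold cosh. destruct (Rle_dec 0 x).
  - rewrite Rabs_right by lra. assert (exp (-x) <= exp x).
    { destruct (Req_dec x 0). subst; rewrite Ropp_0; lra. left; apply exp_increasing; lra. } lra.
  - rewrite Rabs_left by lra. assert (exp x <= exp (-x)). { left; apply exp_increasing; lra. } lra.
Qed.

Lemma exp_le_cosh x : exp (Rabs x) / 2 <= cosh x.
Proof.
  unfold cosh. pose proof (exp_pos x). pose proof (exp_pos (-x)).
  destruct (Rle_dec 0 x).
  - rewrite Rabs_right by lra. lra.
  - rewrite Rabs_left by lra. lra.
Qed.

Definition ta (m s : R) := sinh (m * s) / cosh (m * s).
Definition cp (m g s : R) := Rpower (cosh (m * s)) g.

Lemma ta_sq m s : 1 - ta m s ^ 2 = / cosh (m * s) ^ 2.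
Proof. unfold ta. pose proof (cosh_sinh (m*s)). pose proof (cosh_pos (m*s)).
  replace (1 - (sinh (m * s) / cosh (m * s)) ^ 2) with ((cosh (m*s) ^ 2 - sinh (m*s)^2) / cosh (m*s) ^ 2) by (field; lra).
  rewrite H. field. lra. Qed.

Lemma ta_bound m s : Rabs (ta m s) <= 1.
Proof.
  assert (0 <= 1 - ta m s ^2). { rewrite ta_sq. pose proof (cosh_pos (m*s)). apply Rlt_le, Rinv_0_lt_compat. nra. }
  apply Rabs_le. nra.
Qed.

Lemma ta_opp m s : ta m (- s) = - ta m s.
Proof. unfold ta. replace (m * -s) with (-(m*s)) by ring. rewrite cosh_opp, sinh_opp. field. pose proof (cosh_pos (m*s)); lra. Qed.

Lemma cp_opp m g s : cp m g (-s) = cp m g s.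
Proof. unfold cp. replace (m * -s) with (-(m*s)) by ring. rewrite cosh_opp. auto. Qed.

Lemma cp_pos m g s : 0 < cp m g s.
Proof. unfold cp, Rpower. apply exp_pos. Qed.

Lemma is_derive_cosh_m (m s : R) : is_derive (fun s => cosh (m * s)) s (m * sinh (m * s)).
Proof.
  apply is_derive_Reals. unfold cosh, sinh.
  apply is_derive_Reals. auto_derive; auto. field.
Qed.

Lemma is_derive_sinh_m (m s : R) : is_derive (fun s => sinh (m * s)) s (m * cosh (m * s)).
Proof.
  apply is_derive_Reals. unfold cosh, sinh.
  apply is_derive_Reals. auto_derive; auto. field.
Qed.

Lemma is_derive_ta (m s : R) : is_derive (ta m) s (m * (1 - ta m s ^ 2)).
Proof.
  rewrite ta_sq. pose proof (cosh_pos (m*s)).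
  unfold ta. unfold cosh, sinh in *. auto_derive.
  - pose proof (exp_pos (m*s)); pose proof (exp_pos (-(m*s))). lra.
  - pose proof (exp_opp_mul (m*s)). pose proof (exp_pos (m*s)); pose proof (exp_pos (-(m*s))).
    set (E := exp (m*s)) in *. set (F := exp (-(m*s))) in *. 
    assert (E + F <> 0) by lra. field_simplify; [|lra..].
    replace (16 * m * E * F) with (16 * m * (E * F)) by ring. rewrite H0.
    field. split; nra.
Qed.

Lemma is_derive_cp (m g s : R) : is_derive (cp m g) s (g * m * ta m s * cp m g s).
Proof.
  unfold cp, Rpower, ta. pose proof (cosh_pos (m*s)).
  unfold cosh, sinh in *. auto_derive.
  - lra.
  - unfold Rdiv. field. unfold Rdiv in H. lra.
Qed.

Lemma ln_cosh_le x : ln (cosh x) <= Rabs x.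
Proof.
  rewrite <- (ln_exp (Rabs x)). apply ln_le. apply cosh_pos. apply cosh_le_exp.
Qed.

Lemma ln_cosh_ge x : Rabs x - ln 2 <= ln (cosh x).
Proof.
  assert (H: ln (exp (Rabs x) / 2) <= ln (cosh x)).
  { apply ln_le. pose proof (exp_pos (Rabs x)); lra. apply exp_le_cosh. }
  unfold Rdiv in H. rewrite ln_mult, ln_Rinv, ln_exp in H; try lra.
  all: try apply exp_pos; try (apply Rinv_0_lt_compat; lra).
Qed.

Lemma exp_le_mono x y : x <= y -> exp x <= exp y.
Proof. intros [H|H]. left; apply exp_increasing; auto. subst; lra. Qed.

Lemma Rabs_mult_m m s : 0 <= m -> Rabs (m * s) = m * Rabs s.
Proof. intros. rewrite Rabs_mult, Rabs_right; lra. Qed.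

Lemma cp_up m g s : 0 <= g -> 0 <= m -> cp m g s <= exp (g * m * Rabs s).
Proof.
  intros Hg Hm. unfold cp, Rpower. apply exp_le_mono.
  pose proof (ln_cosh_le (m*s)). rewrite Rabs_mult_m in H by auto.
  rewrite Rmult_assoc. apply Rmult_le_compat_l; auto.
Qed.

Lemma cp_neg_up m g s : 0 <= g -> 0 <= m ->
  cp m (- g) s <= exp (g * ln 2) * exp (- (g * m * Rabs s)).
Proof.
  intros Hg Hm. unfold cp, Rpower. rewrite <- exp_plus. apply exp_le_mono.
  pose proof (ln_cosh_ge (m*s)). rewrite Rabs_mult_m in H by auto. nra.
Qed.

Lemma cp_plus m a b s : cp m a s * cp m b s = cp m (a + b) s.
Proof. unfold cp. rewrite Rpower_plus. auto. Qed.

Lemma cp_0 m s : cp m 0 s = 1.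
Proof. unfold cp. apply Rpower_O, cosh_pos. Qed.

Lemma cp_1 m s : cp m 1 s = cosh (m * s).
Proof. unfold cp. apply Rpower_1, cosh_pos. Qed.

Lemma cp_inv m a s : cp m (- a) s = / cp m a s.
Proof. unfold cp. apply Rpower_Ropp. Qed.

Lemma der_const (c x : R) : is_derive (fun _ : R => c) x 0.
Proof. apply is_derive_Reals. apply derivable_pt_lim_const. Qed.

Lemma der_plus (f g : R -> R) (x df dg : R) : is_derive f x df -> is_derive g x dg ->
  is_derive (fun y => f y + g y) x (df + dg).
Proof. intros H1 H2. apply is_derive_Reals in H1; apply is_derive_Reals in H2. apply is_derive_Reals.
  apply (derivable_pt_lim_plus f g); auto. Qed.
Lemma der_minus (f g : R -> R) (x df dg : R) : is_derive f x df -> is_derive g x dg ->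
  is_derive (fun y => f y - g y) x (df - dg).
Proof. intros H1 H2. apply is_derive_Reals in H1; apply is_derive_Reals in H2. apply is_derive_Reals.
  apply (derivable_pt_lim_minus f g); auto. Qed.
Lemma der_mult (f g : R -> R) (x df dg : R) : is_derive f x df -> is_derive g x dg ->
  is_derive (fun y => f y * g y) x (df * g x + f x * dg).
Proof. intros H1 H2. apply is_derive_Reals in H1; apply is_derive_Reals in H2. apply is_derive_Reals.
  apply (derivable_pt_lim_mult f g); auto. Qed.
Lemma der_opp_arg (f : R -> R) (x df : R) : is_derive f (- x) df ->
  is_derive (fun y => f (- y)) x (- df).
Proof. intros H1. apply is_derive_Reals in H1. apply is_derive_Reals.
  replace (- df) with (df * (-1)) by ring.
  apply (derivable_pt_lim_comp Ropp f). apply is_derive_Reals. auto_derive; auto. auto. Qed.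
Lemma der_ext (f g : R -> R) (x d : R) : (forall y, f y = g y) -> is_derive f x d -> is_derive g x d.
Proof. intros. eapply is_derive_ext; eauto. Qed.
Lemma der_eq (f : R -> R) (x d d' : R) : d = d' -> is_derive f x d -> is_derive f x d'.
Proof. intros ->; auto. Qed.
Lemma der_unique (f : R -> R) (x d d' : R) : is_derive f x d -> is_derive f x d' -> d = d'.
Proof. intros H1 H2. apply is_derive_Reals in H1; apply is_derive_Reals in H2.
  eapply uniqueness_limite; eauto. Qed.

Lemma der_cont (f : R -> R) (x d : R) : is_derive f x d -> continuous f x.
Proof. intro H. apply (@ex_derive_continuous R_AbsRing R_NormedModule). exists d; exact H. Qed.

Lemma cp_low m g s : 0 <= g -> 0 <= m -> exp (- (g * m * Rabs s)) <= cp m (- g) s.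
Proof.
  intros Hg Hm. unfold cp, Rpower. apply exp_le_mono.
  pose proof (ln_cosh_le (m*s)). rewrite Rabs_mult_m in H by auto. nra.
Qed.

Lemma cont_to_pt (f : R -> R) x : continuous f x -> continuity_pt f x.
Proof. intro H. apply continuity_pt_filterlim. exact H. Qed.
Lemma pt_to_cont (f : R -> R) x : continuity_pt f x -> continuous f x.
Proof. intro H. apply continuity_pt_filterlim in H. exact H. Qed.
Lemma cont_mult (f g : R -> R) x : continuous f x -> continuous g x -> continuous (fun y => f y * g y) x.
Proof. intros H1 H2. apply pt_to_cont. apply (continuity_pt_mult f g); apply cont_to_pt; auto. Qed.
Lemma cont_plus (f g : R -> R) x : continuous f x -> continuous g x -> continuous (fun y => f y + g y) x.
Proof. intros H1 H2. apply pt_to_cont. apply (continuity_pt_plus f g); apply cont_to_pt; auto. Qed.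
Lemma cont_opp_arg (f : R -> R) x : continuous f (- x) -> continuous (fun y => f (- y)) x.
Proof. intros H1. apply pt_to_cont. apply (continuity_pt_comp Ropp f). apply continuity_pt_opp, continuity_pt_id.
  apply cont_to_pt; auto. Qed.

Lemma der_opp (f : R -> R) (x d : R) : is_derive f x d -> is_derive (fun y => - f y) x (- d).
Proof. intros H1. apply is_derive_Reals in H1. apply is_derive_Reals.
  apply (derivable_pt_lim_opp f); auto. Qed.

Lemma cmp_deriv (F F' G G' : R -> R) a b : a <= b ->
  (forall x, a <= x <= b -> is_derive F x (F' x)) ->
  (forall x, a <= x <= b -> is_derive G x (G' x)) ->
  (forall x, a <= x <= b -> F' x <= G' x) -> F b - F a <= G b - G a.
Proof.
  intros Hab HF HG Hle. destruct (Req_dec a b). subst; lra.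
  destruct (MVT_cor3 (fun x => G x - F x) (fun x => G' x - F' x) a b) as [c [H1 [H2 H3]]]; try lra.
  - intros x H1 H2. apply is_derive_Reals. apply (is_derive_minus G F); auto.
  - specialize (Hle c (conj H1 H2)). nra.
Qed.

Lemma zero_deriv_const (F : R -> R) :
  (forall x, is_derive F x 0) -> forall x y, F x = F y.
Proof.
  intros H x y.
  assert (forall a b, a <= b -> F b - F a <= 0 /\ 0 <= F b - F a).
  { intros a b Hab. split.
    - pose proof (cmp_deriv F (fun _ => 0) (fun _ => 0) (fun _ => 0) a b Hab) as K.
      assert (G0 : forall x, is_derive (fun _:R => 0) x 0) by (intro; apply der_const).
      specialize (K (fun x _ => H x) (fun x _ => G0 x) (fun x _ => Rle_refl 0)). lra.
    - pose proof (cmp_deriv (fun _ => 0) (fun _ => 0) F (fun _ => 0) a b Hab) as K.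
      assert (G0 : forall x, is_derive (fun _:R => 0) x 0) by (intro; apply der_const).
      specialize (K (fun x _ => G0 x) (fun x _ => H x) (fun x _ => Rle_refl 0)). lra. }
  destruct (Rle_dec x y). specialize (H0 x y r). lra. specialize (H0 y x). lra.
Qed.

Definition prim (H : R -> R) (s : R) : R := RInt H 0 s.

Lemma is_derive_prim H : (forall x, continuous H x) -> forall s, is_derive (prim H) s (H s).
Proof.
  intros Hc s. unfold prim. apply (is_derive_RInt H (RInt H 0) 0 s).
  - apply filter_forall. intro b. exact (RInt_correct (V:=R_CompleteNormedModule) H 0 b (ex_RInt_continuous (V:=R_CompleteNormedModule) H 0 b (fun z _ => Hc z))).
  - auto.
Qed.

Lemma prim_0 H : prim H 0 = 0.
Proof. unfold prim. exact (RInt_point (V:=R_CompleteNormedModule) 0 H). Qed.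

Lemma tail_lemma (F H : R -> R) (B d : R) : 0 < d ->
  (forall s, 0 <= s -> is_derive F s (H s)) ->
  (forall s, 0 <= s -> Rabs (H s) <= B * exp (- (d * s))) ->
  exists L, forall s, 0 <= s -> Rabs (L - F s) <= B / d * exp (- (d * s)).
Proof.
  intros Hd HF HB.
  set (U := fun s => F s - B / d * exp (- (d * s))).
  set (V := fun s => F s + B / d * exp (- (d * s))).
  assert (dE : forall s, is_derive (fun s => B / d * exp (- (d * s))) s (- (B * exp (- (d * s))))).
  { intro s. auto_derive; auto. field. lra. }
  assert (HU : forall a b, 0 <= a <= b -> U a <= U b).
  { intros a b Hab.
    assert (K : 0 - 0 <= U b - U a).
    { apply (cmp_deriv (fun _ => 0) (fun _ => 0) U (fun s => H s + B * exp (- (d*s))) a b).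
      - lra.
      - intros; apply der_const.
      - intros x Hx. unfold U. eapply der_eq; [|apply (der_minus F); [apply HF; lra| apply dE]]. simpl; ring.
      - intros x Hx. specialize (HB x ltac:(lra)). apply Rabs_le_between in HB. lra. }
    lra. }
  assert (HV : forall a b, 0 <= a <= b -> V b <= V a).
  { intros a b Hab.
    assert (K : V b - V a <= 0 - 0).
    { apply (cmp_deriv V (fun s => H s - B * exp (- (d*s))) (fun _ => 0) (fun _ => 0) a b).
      - lra.
      - intros x Hx. unfold V. eapply der_eq; [|apply (der_plus F); [apply HF; lra| apply dE]]. simpl; ring.
      - intros; apply der_const.
      - intros x Hx. specialize (HB x ltac:(lra)). apply Rabs_le_between in HB. lra. }
    lra. }
  assert (UV : forall a b, 0 <= a -> 0 <= b -> U a <= V b).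
  { intros a b Ha Hb. assert (U (Rmax a b) <= V (Rmax a b)). unfold U, V.
    pose proof (exp_pos (- (d * Rmax a b))). assert (0 <= B).
    { specialize (HB 0 (Rle_refl 0)). pose proof (Rabs_pos (H 0)). replace (- (d * 0)) with 0 in HB by ring. rewrite exp_0 in HB. lra. }
    assert (0 <= B / d) by (apply Rdiv_le_0_compat; lra). nra.
    pose proof (HU a (Rmax a b)). pose proof (HV b (Rmax a b)).
    assert (a <= Rmax a b) by apply Rmax_l. assert (b <= Rmax a b) by apply Rmax_r. 
    specialize (H1 ltac:(lra)). specialize (H2 ltac:(lra)). lra. }
  destruct (completeness (fun y => exists s, 0 <= s /\ y = U s)) as [L [HL1 HL2]].
  - exists (V 0). intros y [s [Hs ->]]. apply UV; lra.
  - exists (U 0). exists 0. split; lra.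
  exists L. intros s Hs. assert (U s <= L) by (apply HL1; exists s; split; auto).
  assert (L <= V s). { apply HL2. intros y [t [Ht ->]]. apply UV; auto. }
  unfold U, V in *. apply Rabs_le_between. lra.
Qed.

Definition pp (m : R) := (m - 1) / m.
Definition tau1 m s := m * (1 - ta m s ^ 2).
Definition Kf m := prim (fun r => cp m (- pp m) r).
Definition Yf m s := ta m s * Kf m s - cp m (- pp m) s.
Definition Y1 m s := tau1 m s * Kf m s + m * ta m s * cp m (- pp m) s.
Definition aco m s := (m - 1) * ta m s.
Definition bco m s := m * (m + 1) * (1 - ta m s ^ 2).

Lemma cp_cont m g x : continuous (cp m g) x.
Proof. eapply der_cont. apply is_derive_cp. Qed.

Lemma ta_cont m x : continuous (ta m) x.
Proof. eapply der_cont. apply is_derive_ta. Qed.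

Lemma is_derive_K (m s : R) : is_derive (Kf m) s (cp m (- pp m) s).
Proof. apply is_derive_prim. intro; apply cp_cont. Qed.

Lemma is_derive_tau1 (m s : R) : is_derive (tau1 m) s (- aco m s * tau1 m s - bco m s * ta m s).
Proof.
  unfold tau1, aco, bco. pose proof (is_derive_ta m s).
  eapply der_eq; [| apply (der_mult (fun _ => m) (fun s => 1 - ta m s ^ 2)); [apply der_const|]].
  2:{ eapply der_eq; [|apply (der_minus (fun _ => 1)); [apply der_const| ]].
      2:{ eapply der_eq; [| apply (der_mult (ta m) (fun s => ta m s ^ 1))]; [|apply H|].
          2: { eapply der_eq; [| apply (der_mult (ta m) (fun _ => 1)); [apply H| apply der_const]]. reflexivity. }
          reflexivity. }
      reflexivity. }
  simpl. ring.
Qed.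

Lemma is_derive_Y (m s : R) : 0 < m -> is_derive (Yf m) s (Y1 m s).
Proof.
  intro Hm. unfold Yf, Y1.
  eapply der_eq; [| apply der_minus; [apply der_mult; [apply is_derive_ta| apply is_derive_K] | apply is_derive_cp]].
  unfold tau1, pp. field. lra.
Qed.

Lemma is_derive_Y1 (m s : R) : 0 < m -> is_derive (Y1 m) s (- aco m s * Y1 m s - bco m s * Yf m s).
Proof.
  intro Hm. unfold Y1.
  eapply der_eq; [| apply der_plus; [apply der_mult; [apply is_derive_tau1| apply is_derive_K] |
     apply der_mult; [ apply (der_mult (fun _ => m)); [apply der_const | apply is_derive_ta] | apply is_derive_cp]]].
  unfold Yf, Y1, aco, bco, tau1, pp. field. lra.
Qed.

Lemma K_0 m : Kf m 0 = 0.
Proof. apply prim_0. Qed.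

Lemma K_odd m s : Kf m (- s) = - Kf m s.
Proof.
  assert (H : forall x, (fun s => Kf m s + Kf m (- s)) x = (fun s => Kf m s + Kf m (- s)) 0).
  { intro y. apply (zero_deriv_const (fun s => Kf m s + Kf m (- s))). intro x.
    eapply der_eq; [| apply der_plus; [apply is_derive_K | apply der_opp_arg; apply is_derive_K]].
    rewrite cp_opp. ring. }
  specialize (H s). simpl in H. rewrite Ropp_0, K_0 in H. lra.
Qed.

Lemma tau1_opp m s : tau1 m (- s) = tau1 m s.
Proof. unfold tau1. rewrite ta_opp. ring. Qed.

Lemma Y_even m s : Yf m (- s) = Yf m s.
Proof. unfold Yf. rewrite ta_opp, K_odd, cp_opp. ring. Qed.

Lemma Y1_odd m s : Y1 m (- s) = - Y1 m s.
Proof. unfold Y1. rewrite ta_opp, K_odd, cp_opp, tau1_opp. ring. Qed.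

Lemma aco_opp m s : aco m (- s) = - aco m s.
Proof. unfold aco. rewrite ta_opp. ring. Qed.

Lemma bco_opp m s : bco m (- s) = bco m s.
Proof. unfold bco. rewrite ta_opp. ring. Qed.

Lemma wr_tY m s : ta m s * Y1 m s - tau1 m s * Yf m s = m * cp m (- pp m) s.
Proof. unfold Y1, Yf, tau1. ring. Qed.

Lemma is_derive_ta' (m s : R) : is_derive (ta m) s (tau1 m s).
Proof. apply is_derive_ta. Qed.

Lemma wr_const (m : R) (u u1 v v1 : R -> R) : 0 < m ->
  (forall s, is_derive u s (u1 s)) -> (forall s, is_derive u1 s (- aco m s * u1 s - bco m s * u s)) ->
  (forall s, is_derive v s (v1 s)) -> (forall s, is_derive v1 s (- aco m s * v1 s - bco m s * v s)) ->
  forall s t, cp m (pp m) s * (u s * v1 s - u1 s * v s) = cp m (pp m) t * (u t * v1 t - u1 t * v t).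
Proof.
  intros Hm Hu Hu1 Hv Hv1 s t.
  apply (zero_deriv_const (fun s => cp m (pp m) s * (u s * v1 s - u1 s * v s))).
  intro x. eapply der_eq; [| apply der_mult; [apply is_derive_cp | apply der_minus; apply der_mult; eauto]].
  unfold aco, pp. field. lra.
Qed.

Lemma K_mono m a b : 0 <= a <= b -> Kf m a <= Kf m b.
Proof.
  intros Hab.
  assert (0 - 0 <= Kf m b - Kf m a).
  { apply (cmp_deriv (fun _ => 0) (fun _ => 0) (Kf m) (cp m (- pp m)) a b). lra.
    intros; apply der_const. intros; apply is_derive_K. intros; left; apply cp_pos. }
  lra.
Qed.

Lemma K1_pos m : 1 < m -> exp (- (m - 1)) <= Kf m 1.
Proof.
  intros Hm.
  assert (exp (- (m-1)) * 1 - exp (- (m-1)) * 0 <= Kf m 1 - Kf m 0).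
  { apply (cmp_deriv (fun s => exp (- (m-1)) * s) (fun _ => exp (- (m-1))) (Kf m) (cp m (- pp m)) 0 1). lra.
    intros. eapply der_eq; [|apply (der_mult (fun _ => exp (- (m-1))) (fun s => s)); [apply der_const| apply is_derive_Reals, derivable_pt_lim_id]]. ring.
    intros; apply is_derive_K.
    intros x Hx. eapply Rle_trans; [|apply cp_low]. apply exp_le_mono.
    rewrite Rabs_right by lra. unfold pp. 
    assert ((m - 1) / m * m = m - 1) by (field; lra). nra.
    unfold pp. apply Rdiv_le_0_compat; lra. lra. }
  rewrite K_0 in H. lra.
Qed.

Lemma small_zero x : (forall e, 0 < e -> Rabs x <= e) -> x = 0.
Proof.
  intros H. destruct (Req_dec x 0); auto. exfalso.
  specialize (H (Rabs x / 2)). assert (0 < Rabs x) by (apply Rabs_pos_lt; auto). specialize (H ltac:(lra)). lra.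
Qed.

Lemma exp_neg_le x : 0 <= x -> exp (- x) <= / (1 + x).
Proof.
  intros Hx. rewrite exp_Ropp. apply Rinv_le_contravar. lra. pose proof (exp_ineq1_le x). lra.
Qed.

Lemma ev_cp m g : 0 < m -> 0 < g -> forall e, 0 < e -> exists S, forall s, S <= Rabs s -> cp m (- g) s <= e.
Proof.
  intros Hm Hg e He. set (B := exp (g * ln 2)). assert (0 < B) by apply exp_pos.
  assert (Hgm : 0 < g * m) by nra.
  exists (B / (e * g * m)). intros s Hs.
  eapply Rle_trans. apply cp_neg_up; lra. fold B.
  set (x := g * m * Rabs s).
  assert (0 <= x) by (pose proof (Rabs_pos s); unfold x; nra).
  eapply Rle_trans. apply Rmult_le_compat_l. lra. apply exp_neg_le. auto.
  assert (Hx : B <= e * x).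
  { unfold x. replace B with (e * (g * m) * (B / (e * g * m))) by (field; lra).
    replace (e * (g * m * Rabs s)) with (e * (g * m) * Rabs s) by ring.
    apply Rmult_le_compat_l; nra. }
  assert (0 < 1 + x) by lra.
  apply (Rmult_le_reg_r (1 + x)); auto. rewrite Rmult_assoc, Rinv_l by lra. nra.
Qed.

Lemma ta_nonneg m s : 0 <= m -> 0 <= s -> 0 <= ta m s.
Proof.
  intros Hm Hs. unfold ta. apply Rdiv_le_0_compat; [|apply cosh_pos].
  unfold sinh. assert (exp (- (m*s)) <= exp (m*s)) by (apply exp_le_mono; nra). lra.
Qed.

Lemma ta_le1 m s : ta m s <= 1.
Proof. pose proof (ta_bound m s). apply Rabs_le_between in H. lra. Qed.

Lemma one_minus_ta m s : 0 <= m -> 0 <= s -> 1 - ta m s <= / cosh (m * s).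
Proof.
  intros Hm Hs. pose proof (ta_nonneg m s Hm Hs). pose proof (ta_le1 m s).
  assert (1 - ta m s <= 1 - ta m s ^ 2) by nra. rewrite ta_sq in H1.
  pose proof (cosh_ge1 (m*s)).
  eapply Rle_trans; [apply H1|]. apply Rinv_le_contravar. lra. nra.
Qed.

Lemma ev_ta m : 0 < m -> forall e, 0 < e -> exists S, 0 <= S /\ forall s, S <= s -> 1 - e <= ta m s.
Proof.
  intros Hm e He. destruct (ev_cp m 1 Hm ltac:(lra) e He) as [S HS].
  exists (Rabs S). split. apply Rabs_pos. intros s Hs.
  assert (0 <= s) by (pose proof (Rabs_pos S); lra).
  pose proof (one_minus_ta m s ltac:(lra) H). specialize (HS s). rewrite Rabs_right in HS by lra.
  rewrite cp_inv, cp_1 in HS.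
  assert (S <= s) by (pose proof (Rle_abs S); lra). specialize (HS H1). lra.
Qed.

Lemma ta_tau1 (m s : R) : is_derive (tau1 m) s (- aco m s * tau1 m s - bco m s * ta m s).
Proof. apply is_derive_tau1. Qed.

Lemma kernel_zero m (h h1 : R -> R) : 1 < m ->
  (forall s, is_derive h s (h1 s)) ->
  (forall s, is_derive h1 s (- aco m s * h1 s - bco m s * h s)) ->
  (forall e, 0 < e -> exists S, forall s, S <= Rabs s -> Rabs (h s) <= e) ->
  forall s, h s = 0.
Proof.
  intros Hm Hh Hh1 Hdec.
  set (al := cp m (pp m) 0 * (h 0 * tau1 m 0 - h1 0 * ta m 0)).
  set (be := cp m (pp m) 0 * (h 0 * Y1 m 0 - h1 0 * Yf m 0)).
  assert (E1 : forall s, cp m (pp m) s * (h s * tau1 m s - h1 s * ta m s) = al).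
  { intro s. apply (wr_const m h h1 (ta m) (tau1 m)); auto; try lra. apply is_derive_ta'. apply ta_tau1. }
  assert (E2 : forall s, cp m (pp m) s * (h s * Y1 m s - h1 s * Yf m s) = be).
  { intro s. apply (wr_const m h h1 (Yf m) (Y1 m)); auto; try lra.
    intro; apply is_derive_Y; lra. intro; apply is_derive_Y1; lra. }
  assert (Hrep : forall s, h s * m = be * ta m s - al * Yf m s).
  { intro s. rewrite <- (E1 s), <- (E2 s).
    transitivity (h s * (cp m (pp m) s * (ta m s * Y1 m s - tau1 m s * Yf m s))); [|ring].
    rewrite wr_tY. replace (cp m (pp m) s * (m * cp m (- pp m) s)) with (m * (cp m (pp m) s * cp m (- pp m) s)) by ring.
    rewrite cp_plus. replace (pp m + - pp m) with 0 by ring. rewrite cp_0. ring. }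
  pose proof (K1_pos m Hm) as HK1. set (K1 := Kf m 1) in *. assert (0 < K1) by (pose proof (exp_pos (- (m-1))); lra).
  assert (Hpp : 0 < pp m) by (unfold pp; apply Rdiv_lt_0_compat; lra).
  destruct (ev_ta m ltac:(lra) (1/4) ltac:(lra)) as [S1 [HS1 HS1']].
  destruct (ev_cp m (pp m) ltac:(lra) Hpp (K1 / 4) ltac:(lra)) as [S2 HS2].
  assert (Hal : al = 0).
  { apply small_zero. intros e He.
    destruct (Hdec (e * K1 / (4 * m))) as [S HS]. apply Rdiv_lt_0_compat; nra.
    set (s := Rmax (Rmax S (Rabs S2)) (Rmax S1 1)).
    assert (Hs1 : 1 <= s) by (unfold s; eapply Rle_trans; [|apply Rmax_r]; apply Rmax_r).
    assert (HsS : S <= s) by (unfold s; eapply Rle_trans; [|apply Rmax_l]; apply Rmax_l).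
    assert (HsS2 : Rabs S2 <= s) by (unfold s; eapply Rle_trans; [|apply Rmax_l]; apply Rmax_r).
    assert (HsS1 : S1 <= s) by (unfold s; eapply Rle_trans; [|apply Rmax_r]; apply Rmax_l).
    assert (Hta : 3/4 <= ta m s) by (specialize (HS1' s HsS1); lra).
    assert (Hcp : cp m (- pp m) s <= K1 / 4). { apply HS2. rewrite Rabs_right by lra. pose proof (Rle_abs S2). lra. }
    assert (HKs : K1 <= Kf m s) by (apply K_mono; lra).
    assert (HY : K1 / 2 <= Yf m s). { unfold Yf. nra. }
    assert (Hsum : (h s + h (- s)) * m = - 2 * al * Yf m s).
    { rewrite Rmult_plus_distr_r, Hrep, Hrep, ta_opp, Y_even. ring. }
    assert (Ha : Rabs (h s) <= e * K1 / (4 * m)) by (apply HS; rewrite Rabs_right; lra).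
    assert (Hb : Rabs (h (- s)) <= e * K1 / (4 * m)) by (apply HS; rewrite Rabs_Ropp, Rabs_right; lra).
    assert (Rabs ((h s + h (- s)) * m) <= e * K1 / 2).
    { rewrite Rabs_mult, (Rabs_right m) by lra. pose proof (Rabs_triang (h s) (h (-s))).
      assert (e * K1 / 2 = 2 * (e * K1 / (4 * m)) * m) by (field; lra). nra. }
    rewrite Hsum in H0. rewrite !Rabs_mult, (Rabs_right (Yf m s)) in H0 by lra.
    replace (Rabs (-2)) with 2 in H0 by (rewrite Rabs_left; lra).
    assert (2 * Rabs al * (K1/2) <= e * K1 / 2).
    { eapply Rle_trans; [|apply H0]. apply Rmult_le_compat_l. pose proof (Rabs_pos al); lra. lra. }
    assert (Rabs al * K1 <= e / 2 * K1) by lra.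
    apply Rmult_le_reg_r in H2; lra. }
  assert (Hbe : be = 0).
  { apply small_zero. intros e He.
    destruct (Hdec (e / (4 * m))) as [S HS]. apply Rdiv_lt_0_compat; nra.
    set (s := Rmax S (Rmax S1 0)).
    assert (HsS : S <= s) by apply Rmax_l.
    assert (HsS1 : S1 <= s) by (unfold s; eapply Rle_trans; [|apply Rmax_r]; apply Rmax_l).
    assert (Hs0 : 0 <= s) by (unfold s; eapply Rle_trans; [|apply Rmax_r]; apply Rmax_r).
    assert (Hta : 3/4 <= ta m s) by (specialize (HS1' s HsS1); lra).
    assert (Hdif : (h s - h (- s)) * m = 2 * be * ta m s).
    { rewrite Rmult_minus_distr_r, Hrep, Hrep, ta_opp, Y_even, Hal. ring. }
    assert (Ha : Rabs (h s) <= e / (4 * m)) by (apply HS; rewrite Rabs_right; lra).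
    assert (Hb : Rabs (h (- s)) <= e / (4 * m)) by (apply HS; rewrite Rabs_Ropp, Rabs_right; lra).
    assert (Rabs ((h s - h (- s)) * m) <= e / 2).
    { rewrite Rabs_mult, (Rabs_right m) by lra. pose proof (Rabs_triang (h s) (- h (-s))).
      rewrite Rabs_Ropp in H0. unfold Rminus.
      assert (e / 2 = 2 * (e / (4 * m)) * m) by (field; lra). nra. }
    rewrite Hdif, !Rabs_mult, (Rabs_right (ta m s)), (Rabs_right 2) in H0 by lra.
    pose proof (Rabs_pos be). nra. }
  intro s. pose proof (Hrep s). rewrite Hal, Hbe in H0. nra.
Qed.

Definition Bp m := exp (pp m * ln 2).

Definition GoodA (m A : R) : Prop := 1 < m /\ 0 < A /\
  forall s, 0 <= s -> Rabs (A - Kf m s) <= Bp m / (m - 1) * exp (- ((m - 1) * s)).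

Lemma pp_m m : 0 < m -> pp m * m = m - 1.
Proof. intros. unfold pp. field. lra. Qed.

Lemma pp_pos m : 1 < m -> 0 < pp m.
Proof. intros. unfold pp. apply Rdiv_lt_0_compat; lra. Qed.

Lemma pp_lt1 m : 1 < m -> pp m < 1.
Proof. intros. unfold pp. apply Rlt_div_l; lra. Qed.

Lemma cpneg_bound m s : 1 < m -> cp m (- pp m) s <= Bp m * exp (- ((m - 1) * Rabs s)).
Proof.
  intros Hm. pose proof (pp_pos m Hm). eapply Rle_trans. apply cp_neg_up; lra.
  unfold Bp. rewrite <- (pp_m m) by lra. try (right; f_equal; f_equal; ring).
Qed.

Lemma exists_A m : 1 < m -> exists A, GoodA m A.
Proof.
  intros Hm.
  destruct (tail_lemma (Kf m) (cp m (- pp m)) (Bp m) (m - 1)) as [A HA].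
  - lra.
  - intros; apply is_derive_K.
  - intros s Hs. rewrite Rabs_right by (left; apply cp_pos). eapply Rle_trans. apply cpneg_bound; auto.
    rewrite Rabs_right by lra. lra.
  - exists A. split; auto. split; auto.
    pose proof (K1_pos m Hm) as HK1. set (K1 := Kf m 1) in *. assert (0 < K1) by (pose proof (exp_pos (- (m-1))); lra).
    assert (HB : 0 < Bp m) by apply exp_pos.
    set (s := Rmax 1 (2 * Bp m / (K1 * (m - 1) ^ 2))).
    assert (Hs1 : 1 <= s) by apply Rmax_l.
    assert (Hs2 : 2 * Bp m / (K1 * (m - 1) ^ 2) <= s) by apply Rmax_r.
    specialize (HA s ltac:(lra)). apply Rabs_le_between in HA.
    assert (K1 <= Kf m s) by (apply K_mono; lra).
    assert (He : exp (- ((m - 1) * s)) <= / (1 + (m - 1) * s)) by (apply exp_neg_le; nra).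
    assert (Bp m / (m - 1) * exp (- ((m - 1) * s)) <= K1 / 2).
    { eapply Rle_trans. apply Rmult_le_compat_l. apply Rdiv_le_0_compat; lra. apply He.
      assert (0 < 1 + (m-1) * s) by nra.
      apply (Rmult_le_reg_r (1 + (m-1) * s)); auto.
      replace (Bp m / (m - 1) * / (1 + (m - 1) * s) * (1 + (m - 1) * s)) with (Bp m / (m - 1)) by (field; lra).
      assert (2 * Bp m <= s * (K1 * (m - 1) ^ 2)).
      { assert (0 < K1 * (m-1)^2) by (apply Rmult_lt_0_compat; [lra| apply pow_lt; lra]).
        replace (2 * Bp m) with (2 * Bp m / (K1 * (m - 1) ^ 2) * (K1 * (m - 1) ^ 2)) by (field; split; lra).
        apply Rmult_le_compat_r; lra. }
      apply (Rmult_le_reg_r (m - 1)); [lra|]. replace (Bp m / (m - 1) * (m - 1)) with (Bp m) by (field; lra).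
      nra. }
    lra.
Qed.

Definition yp m A s := A * ta m s - Yf m s.
Definition yp1 m A s := A * tau1 m s - Y1 m s.

Lemma is_derive_yp (m A s : R) : 0 < m -> is_derive (yp m A) s (yp1 m A s).
Proof.
  intros Hm. unfold yp, yp1. apply der_minus. eapply der_eq; [|apply (der_mult (fun _ => A) (ta m)); [apply der_const|apply is_derive_ta']]. ring.
  apply is_derive_Y; auto.
Qed.

Lemma is_derive_yp1 (m A s : R) : 0 < m -> is_derive (yp1 m A) s (- aco m s * yp1 m A s - bco m s * yp m A s).
Proof.
  intros Hm. unfold yp, yp1. eapply der_eq; [|apply der_minus; [apply (der_mult (fun _ => A) (tau1 m)); [apply der_const|apply is_derive_tau1] | apply is_derive_Y1; auto]].
  ring.
Qed.

Lemma yp_opp m A s : yp m A (- s) = - A * ta m s - Yf m s.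
Proof. unfold yp. rewrite ta_opp, Y_even. ring. Qed.

Lemma yp1_opp m A s : yp1 m A (- s) = A * tau1 m s + Y1 m s.
Proof. unfold yp1. rewrite tau1_opp, Y1_odd. ring. Qed.

Lemma wr_yp m A s : cp m (pp m) s * (yp m A (- s) * yp1 m A s + yp1 m A (- s) * yp m A s) = 2 * A * m.
Proof.
  rewrite yp_opp, yp1_opp. unfold yp, yp1.
  transitivity (2 * A * (cp m (pp m) s * (ta m s * Y1 m s - tau1 m s * Yf m s))). ring.
  rewrite wr_tY. replace (2 * A * (cp m (pp m) s * (m * cp m (- pp m) s))) with (2 * A * m * (cp m (pp m) s * cp m (- pp m) s)) by ring.
  rewrite cp_plus. replace (pp m + - pp m) with 0 by ring. rewrite cp_0. ring.
Qed.

Lemma cpneg_le1 m g s : 0 <= g -> cp m (- g) s <= 1.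
Proof.
  intros Hg. unfold cp, Rpower. rewrite <- exp_0. apply exp_le_mono.
  pose proof (cosh_ge1 (m*s)). assert (0 <= ln (cosh (m*s))) by (rewrite <- ln_1; apply ln_le; lra). nra.
Qed.

Lemma tau1_bound m s : 0 <= m -> 0 <= tau1 m s <= m.
Proof. intros. unfold tau1. pose proof (ta_bound m s). apply Rabs_le_between in H0.
  assert (0 <= ta m s ^ 2) by nra. assert (ta m s ^2 <= 1) by nra. nra. Qed.

Definition C0 m A := (m + 1) * (2 * A + Bp m / (m - 1) + 1).
Definition C1 m := (m + 1) * (Bp m * (/ (m - 1) + 1)).

Lemma K_bound_all m A : GoodA m A -> forall s, Rabs (Kf m s) <= A + Bp m / (m - 1).
Proof.
  intros [Hm [HA HAK]].
  assert (H0 : forall s, 0 <= s -> Rabs (Kf m s) <= A + Bp m / (m - 1)).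
  { intros s Hs. specialize (HAK s Hs).
    assert (exp (- ((m - 1) * s)) <= 1) by (apply Rle_trans with (exp 0); [apply exp_le_mono; nra | rewrite exp_0; lra]).
    assert (0 <= Bp m / (m-1)) by (apply Rdiv_le_0_compat; [left; apply exp_pos| lra]).
    apply Rabs_le_between in HAK. apply Rabs_le_between. nra. }
  intro s. destruct (Rle_dec 0 s). auto.
  replace s with (- - s) by ring. rewrite K_odd, Rabs_Ropp. apply H0. lra.
Qed.

Lemma yp_alt m A s : yp m A s = ta m s * (A - Kf m s) + cp m (- pp m) s.
Proof. unfold yp, Yf. ring. Qed.
Lemma yp1_alt m A s : yp1 m A s = tau1 m s * (A - Kf m s) - m * ta m s * cp m (- pp m) s.
Proof. unfold yp1, Y1. ring. Qed.

Lemma yp_bd0 m A : GoodA m A -> forall s, Rabs (yp m A s) <= C0 m A /\ Rabs (yp1 m A s) <= C0 m A.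
Proof.
  intros HG s. pose proof (K_bound_all m A HG s) as HK. destruct HG as [Hm [HA HAK]].
  pose proof (ta_bound m s). pose proof (tau1_bound m s ltac:(lra)).
  pose proof (cpneg_le1 m (pp m) s (Rlt_le _ _ (pp_pos m Hm))). pose proof (cp_pos m (- pp m) s).
  assert (0 <= Bp m / (m-1)) by (apply Rdiv_le_0_compat; [left; apply exp_pos| lra]).
  assert (HAK' : Rabs (A - Kf m s) <= 2 * A + Bp m / (m - 1)).
  { eapply Rle_trans. apply Rabs_triang. rewrite Rabs_Ropp, Rabs_right by lra. lra. }
  unfold C0. split.
  - rewrite yp_alt. eapply Rle_trans. apply Rabs_triang. rewrite Rabs_mult, (Rabs_right (cp _ _ _)) by lra.
    pose proof (Rabs_pos (A - Kf m s)). pose proof (Rabs_pos (ta m s)).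
    assert (Rabs (ta m s) * Rabs (A - Kf m s) <= 1 * (2 * A + Bp m / (m - 1))) by (apply Rmult_le_compat; lra).
    assert (0 <= 2 * A + Bp m / (m - 1) + 1) by lra. nra.
  - rewrite yp1_alt. unfold Rminus. eapply Rle_trans. apply Rabs_triang. rewrite Rabs_Ropp, !Rabs_mult.
    rewrite (Rabs_right (cp _ _ _)), (Rabs_right m), (Rabs_right (tau1 m s)) by lra.
    pose proof (Rabs_pos (A - Kf m s)). pose proof (Rabs_pos (ta m s)).
    assert (tau1 m s * Rabs (A - Kf m s) <= m * (2 * A + Bp m / (m - 1))) by (apply Rmult_le_compat; lra).
    assert (m * Rabs (ta m s) * cp m (- pp m) s <= m * 1 * 1).
    { apply Rmult_le_compat; try lra. apply Rmult_le_pos; lra. apply Rmult_le_compat_l; lra. }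
    assert (0 <= 2 * A + Bp m / (m - 1) + 1) by lra. unfold Rminus in *. nra.
Qed.

Lemma yp_bd1 m A : GoodA m A -> forall s, 0 <= s ->
  Rabs (yp m A s) <= C1 m * exp (- ((m - 1) * s)) /\ Rabs (yp1 m A s) <= C1 m * exp (- ((m - 1) * s)).
Proof.
  intros [Hm [HA HAK]] s Hs. specialize (HAK s Hs).
  pose proof (ta_bound m s). pose proof (tau1_bound m s ltac:(lra)).
  pose proof (cpneg_bound m s Hm) as Hc. rewrite Rabs_right in Hc by lra. pose proof (cp_pos m (- pp m) s).
  set (E := exp (- ((m - 1) * s))) in *. assert (0 < E) by apply exp_pos.
  set (B := Bp m) in *. assert (0 < B) by apply exp_pos.
  assert (0 <= B / (m - 1)) by (apply Rdiv_le_0_compat; lra).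
  assert (HC1 : C1 m * E = (m + 1) * (B / (m - 1) * E + B * E)) by (unfold C1; fold B; field; lra).
  rewrite HC1. pose proof (Rabs_pos (A - Kf m s)). pose proof (Rabs_pos (ta m s)).
  split.
  - rewrite yp_alt. eapply Rle_trans. apply Rabs_triang. rewrite Rabs_mult, (Rabs_right (cp _ _ _)) by lra.
    assert (Rabs (ta m s) * Rabs (A - Kf m s) <= 1 * (B / (m - 1) * E)) by (apply Rmult_le_compat; lra).
    assert (0 <= B / (m - 1) * E + B * E) by nra.
    assert (0 <= m * (B / (m - 1) * E + B * E)) by (apply Rmult_le_pos; lra). lra.
  - rewrite yp1_alt. unfold Rminus. eapply Rle_trans. apply Rabs_triang. rewrite Rabs_Ropp, !Rabs_mult.
    rewrite (Rabs_right (cp _ _ _)), (Rabs_right m), (Rabs_right (tau1 m s)) by lra.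
    assert (tau1 m s * Rabs (A + - Kf m s) <= m * (B / (m - 1) * E)) by (apply Rmult_le_compat; unfold Rminus in *; lra).
    assert (m * Rabs (ta m s) * cp m (- pp m) s <= m * 1 * (B * E)).
    { apply Rmult_le_compat; try lra. apply Rmult_le_pos; lra. apply Rmult_le_compat_l; lra. }
    assert (0 <= B / (m - 1) * E + B * E) by nra.
    assert (0 <= (B / (m - 1) * E + B * E)) by lra. unfold Rminus in *. nra.
Qed.

Definition Hg m A (g : R -> R) r := yp m A r * cp m (pp m) r * g r.
Definition gopp (g : R -> R) r := g (- r).
Definition Qf m A g I s := I - prim (Hg m A g) s.
Definition Fg m A g I Im s :=
  (yp m A s * Qf m A (gopp g) Im (- s) + yp m A (- s) * Qf m A g I s) / (2 * A * m).
Definition F1g m A g I Im s :=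
  (yp1 m A s * Qf m A (gopp g) Im (- s) - yp1 m A (- s) * Qf m A g I s) / (2 * A * m).

Lemma yp_cont m A x : 0 < m -> continuous (yp m A) x.
Proof. intros. eapply der_cont. apply is_derive_yp; auto. Qed.

Lemma Hg_cont (m A : R) (g : R -> R) : 0 < m -> (forall x, continuous g x) -> forall x, continuous (Hg m A g) x.
Proof.
  intros Hm Hgc x. unfold Hg. apply cont_mult; auto. apply cont_mult. apply yp_cont; auto. apply cp_cont.
Qed.

Lemma gopp_cont (g : R -> R) : (forall x, continuous g x) -> forall x, continuous (gopp g) x.
Proof. intros Hgc x. unfold gopp. apply cont_opp_arg. auto. Qed.

Lemma is_derive_Qf (m A : R) (g : R -> R) (I s : R) : 0 < m -> (forall x, continuous g x) ->
  is_derive (Qf m A g I) s (- Hg m A g s).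
Proof.
  intros Hm Hgc. unfold Qf. eapply der_eq; [|apply der_minus; [apply der_const| apply is_derive_prim; apply Hg_cont; auto]].
  ring.
Qed.

Lemma is_derive_Fg (m A : R) (g : R -> R) (I Im s : R) : 0 < m -> 0 < A -> (forall x, continuous g x) ->
  is_derive (Fg m A g I Im) s (F1g m A g I Im s).
Proof.
  intros Hm HA Hgc. unfold Fg, F1g.
  assert (Hgo := gopp_cont g Hgc).
  eapply der_eq; [| apply (der_mult _ (fun _ => / (2 * A * m))); [| apply der_const]].
  2:{ apply der_plus; apply der_mult.
      - apply is_derive_yp; auto.
      - apply der_opp_arg. apply is_derive_Qf; auto.
      - apply der_opp_arg. apply is_derive_yp; auto.
      - apply is_derive_Qf; auto. }
  unfold Hg, gopp. rewrite cp_opp, Ropp_involutive. rewrite Ropp_involutive. field. lra.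
Qed.

Lemma is_derive_F1g (m A : R) (g : R -> R) (I Im s : R) : 0 < m -> 0 < A -> (forall x, continuous g x) ->
  is_derive (F1g m A g I Im) s (g s - aco m s * F1g m A g I Im s - bco m s * Fg m A g I Im s).
Proof.
  intros Hm HA Hgc. 
  assert (Hgo := gopp_cont g Hgc).
  assert (HW := wr_yp m A s).
  eapply der_eq with (d := g s * (cp m (pp m) s * (yp m A (- s) * yp1 m A s + yp1 m A (- s) * yp m A s)) / (2 * A * m)
     - aco m s * F1g m A g I Im s - bco m s * Fg m A g I Im s).
  { rewrite HW. field. lra. }
  unfold Fg, F1g.
  eapply der_eq; [| apply (der_mult _ (fun _ => / (2 * A * m))); [| apply der_const]].
  2:{ apply der_minus; apply der_mult.
      - apply is_derive_yp1; auto.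
      - apply der_opp_arg. apply is_derive_Qf; auto.
      - apply der_opp_arg. apply is_derive_yp1; auto.
      - apply is_derive_Qf; auto. }
  unfold Hg, gopp. rewrite cp_opp, (Ropp_involutive s), aco_opp, bco_opp. field. lra.
Qed.

Definition Bb b := exp (b * ln 2).
Definition Xc m b := C1 m * Bb b / (b * m).
Definition Zc m A b := C0 m A * Bb b / (m - 1 - b * m).
Definition Kc m A b := (C1 m * Xc m b + C1 m * Zc m A b + C0 m A * Xc m b) / (2 * A * m).

Definition Goodb m b := 0 < b /\ b < pp m.

Lemma gopp_gopp (g : R -> R) : gopp (gopp g) = g.
Proof. apply functional_extensionality. intro x. unfold gopp. rewrite Ropp_involutive. auto. Qed.

Lemma cpp_up m s : 1 < m -> cp m (pp m) s <= exp ((m - 1) * Rabs s).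
Proof. intros. eapply Rle_trans. apply cp_up. pose proof (pp_pos m H); lra. lra.
  rewrite pp_m by lra. lra. Qed.

Lemma delta_lt m b : 1 < m -> Goodb m b -> 0 < b * m /\ b * m < m - 1.
Proof. intros Hm [H1 H2]. split. nra. rewrite <- (pp_m m) by lra. nra. Qed.

Lemma Hg_bound_pos m A b (g : R -> R) M : GoodA m A -> Goodb m b ->
  (forall r, Rabs (g r) <= M * Bb b * exp (- (b * m * Rabs r))) ->
  forall r, 0 <= r -> Rabs (Hg m A g r) <= C1 m * M * Bb b * exp (- (b * m * r)).
Proof.
  intros HG Hb Hgb r Hr. pose proof HG as [Hm _]. destruct (yp_bd1 m A HG r Hr) as [Hy _].
  pose proof (cpp_up m r Hm) as Hc. rewrite (Rabs_right r) in Hc by lra. specialize (Hgb r). rewrite (Rabs_right r) in Hgb by lra.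
  unfold Hg. rewrite !Rabs_mult, (Rabs_right (cp _ _ _)) by (left; apply cp_pos).
  pose proof (Rabs_pos (yp m A r)). pose proof (Rabs_pos (g r)). pose proof (cp_pos m (pp m) r).
  assert (Rabs (yp m A r) * cp m (pp m) r <= C1 m * exp (- ((m - 1) * r)) * exp ((m - 1) * r)).
  { apply Rmult_le_compat; try lra. }
  eapply Rle_trans. apply Rmult_le_compat; [apply Rmult_le_pos; lra | lra | apply H2 | apply Hgb].
  replace (C1 m * exp (- ((m - 1) * r)) * exp ((m - 1) * r)) with (C1 m) .
  right; ring.
  rewrite Rmult_assoc, <- exp_plus. replace (- ((m - 1) * r) + (m - 1) * r) with 0 by ring. rewrite exp_0. ring.
Qed.

Lemma Hg_bound_all m A b (g : R -> R) M : GoodA m A -> Goodb m b ->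
  (forall r, Rabs (g r) <= M * Bb b * exp (- (b * m * Rabs r))) ->
  forall r, Rabs (Hg m A g r) <= C0 m A * M * Bb b * exp ((m - 1 - b * m) * Rabs r).
Proof.
  intros HG Hb Hgb r. pose proof HG as [Hm _]. destruct (yp_bd0 m A HG r) as [Hy _].
  pose proof (cpp_up m r Hm) as Hc. specialize (Hgb r).
  unfold Hg. rewrite !Rabs_mult, (Rabs_right (cp _ _ _)) by (left; apply cp_pos).
  pose proof (Rabs_pos (yp m A r)). pose proof (Rabs_pos (g r)). pose proof (cp_pos m (pp m) r).
  assert (Rabs (yp m A r) * cp m (pp m) r <= C0 m A * exp ((m - 1) * Rabs r)).
  { apply Rmult_le_compat; try lra. }
  eapply Rle_trans. apply Rmult_le_compat; [apply Rmult_le_pos; lra | lra | apply H2 | apply Hgb].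
  replace (exp ((m - 1 - b * m) * Rabs r)) with (exp ((m - 1) * Rabs r) * exp (- (b * m * Rabs r))).
  right; ring.
  rewrite <- exp_plus. f_equal. ring.
Qed.

Lemma prim_neg_bound (H : R -> R) Cst gam : 0 < gam -> (forall x, continuous H x) ->
  (forall r, Rabs (H r) <= Cst * exp (gam * Rabs r)) ->
  forall s, 0 <= s -> Rabs (prim H (- s)) <= Cst / gam * exp (gam * s).
Proof.
  intros Hgam Hc HB s Hs.
  assert (HC : 0 <= Cst). { specialize (HB 0). rewrite Rabs_R0, Rmult_0_r, exp_0 in HB. pose proof (Rabs_pos (H 0)). lra. }
  assert (dF : forall t, is_derive (fun t => prim H (- t)) t (- H (- t))).
  { intro t. apply der_opp_arg. apply is_derive_prim. auto. }
  assert (dG : forall t, is_derive (fun t => Cst / gam * exp (gam * t)) t (Cst * exp (gam * t))).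
  { intro t. auto_derive; auto. field. lra. }
  assert (dFm : forall t, is_derive (fun t => - prim H (- t)) t (H (- t))).
  { intro t. pose proof (der_opp _ _ _ (dF t)) as K. rewrite Ropp_involutive in K. exact K. }
  assert (Hb : forall t, 0 <= t -> Rabs (H (- t)) <= Cst * exp (gam * t)).
  { intros t Ht. specialize (HB (- t)). rewrite Rabs_Ropp, (Rabs_right t) in HB by lra. auto. }
  pose proof (cmp_deriv (fun t => prim H (- t)) (fun t => - H (- t)) (fun t => Cst / gam * exp (gam * t)) (fun t => Cst * exp (gam * t)) 0 s Hs (fun x _ => dF x) (fun x _ => dG x)) as K1.
  pose proof (cmp_deriv (fun t => - prim H (- t)) (fun t => H (- t)) (fun t => Cst / gam * exp (gam * t)) (fun t => Cst * exp (gam * t)) 0 s Hs (fun x _ => dFm x) (fun x _ => dG x)) as K2.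
  assert (Hle : forall x, 0 <= x <= s -> - H (- x) <= Cst * exp (gam * x)).
  { intros x Hx. specialize (Hb x ltac:(lra)). apply Rabs_le_between in Hb. lra. }
  assert (Hle2 : forall x, 0 <= x <= s -> H (- x) <= Cst * exp (gam * x)).
  { intros x Hx. specialize (Hb x ltac:(lra)). apply Rabs_le_between in Hb. lra. }
  specialize (K1 Hle). specialize (K2 Hle2).
  cbv beta in K1, K2. rewrite Ropp_0, prim_0, Rmult_0_r, exp_0 in K1, K2.
  assert (0 <= Cst / gam) by (apply Rdiv_le_0_compat; lra).
  apply Rabs_le_between. lra.
Qed.

Lemma C1_pos m : 1 < m -> 0 < C1 m.
Proof. intros. unfold C1. assert (0 < Bp m) by apply exp_pos. assert (0 < / (m-1)) by (apply Rinv_0_lt_compat; lra).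
  apply Rmult_lt_0_compat. lra. apply Rmult_lt_0_compat; lra. Qed.

Lemma C0_pos m A : GoodA m A -> 0 < C0 m A.
Proof. intros [Hm [HA _]]. unfold C0. assert (0 < Bp m) by apply exp_pos.
  assert (0 <= Bp m / (m-1)) by (apply Rdiv_le_0_compat; lra). apply Rmult_lt_0_compat; lra. Qed.

Lemma F_bound_pos m A b (g : R -> R) M I Im : GoodA m A -> Goodb m b -> 0 <= M -> (forall x, continuous g x) ->
  (forall r, Rabs (g r) <= M * Bb b * exp (- (b * m * Rabs r))) ->
  (forall s, 0 <= s -> Rabs (I - prim (Hg m A g) s) <= Xc m b * M * exp (- (b * m * s))) ->
  (forall s, 0 <= s -> Rabs (Im - prim (Hg m A (gopp g)) s) <= Xc m b * M * exp (- (b * m * s))) ->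
  forall s, 0 <= s ->
    Rabs (Fg m A g I Im s) <= Kc m A b * M * exp (- (b * m * s)) /\
    Rabs (F1g m A g I Im s) <= Kc m A b * M * exp (- (b * m * s)).
Proof.
  intros HG Hb HM Hgc Hgb HI HIm s Hs. pose proof HG as [Hm [HA _]].
  destruct (delta_lt m b Hm Hb) as [Hd1 Hd2].
  set (gam := m - 1 - b * m).
  assert (Hgam : 0 < gam) by (unfold gam; lra).
  pose proof (C1_pos m Hm). pose proof (C0_pos m A HG).
  assert (HBb : 0 < Bb b) by apply exp_pos.
  assert (HXc : 0 < Xc m b) by (unfold Xc; apply Rdiv_lt_0_compat; [apply Rmult_lt_0_compat|]; lra).
  assert (HZc : 0 < Zc m A b) by (unfold Zc; apply Rdiv_lt_0_compat; [apply Rmult_lt_0_compat| unfold gam in Hgam]; lra).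
  assert (HQ : Rabs (Qf m A g I s) <= Xc m b * M * exp (- (b * m * s))) by (apply HI; auto).
  assert (HQm : Rabs (Qf m A (gopp g) Im (- s)) <= Xc m b * M + Zc m A b * M * exp (gam * s)).
  { unfold Qf. specialize (HIm 0 (Rle_refl 0)). rewrite prim_0, Rminus_0_r, Rmult_0_r, Ropp_0, exp_0, Rmult_1_r in HIm.
    assert (Hgob : forall r, Rabs (gopp g r) <= M * Bb b * exp (- (b * m * Rabs r))).
    { intro r. unfold gopp. rewrite <- (Rabs_Ropp r). apply Hgb. }
    pose proof (prim_neg_bound (Hg m A (gopp g)) (C0 m A * M * Bb b) gam Hgam
      (Hg_cont m A (gopp g) ltac:(lra) (gopp_cont g Hgc)) (Hg_bound_all m A b (gopp g) M HG Hb Hgob) s Hs) as Hp.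
    replace (C0 m A * M * Bb b / gam) with (Zc m A b * M) in Hp by (unfold Zc, gam; field; unfold gam in Hgam; lra).
    unfold Rminus. eapply Rle_trans. apply Rabs_triang. rewrite Rabs_Ropp. lra. }
  pose proof (yp_bd1 m A HG s Hs) as [Hy Hy1].
  pose proof (yp_bd0 m A HG (- s)) as [Hyn Hyn1].
  set (E1 := exp (- ((m - 1) * s))) in *. set (Ed := exp (- (b * m * s))) in *. set (Eg := exp (gam * s)) in *.
  assert (HE1 : E1 <= Ed) by (apply exp_le_mono; apply Ropp_le_contravar; apply Rmult_le_compat_r; lra).
  assert (HE1g : E1 * Eg = Ed) by (unfold E1, Eg, Ed; rewrite <- exp_plus; f_equal; unfold gam; ring).
  assert (0 < E1) by apply exp_pos. assert (0 < Eg) by apply exp_pos. assert (0 < Ed) by apply exp_pos.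
  assert (H2Am : 0 < 2 * A * m) by (apply Rmult_lt_0_compat; lra).
  assert (Hfin : forall N, Rabs N <= C1 m * E1 * (Xc m b * M + Zc m A b * M * Eg) + C0 m A * (Xc m b * M * Ed) ->
           Rabs (N / (2 * A * m)) <= Kc m A b * M * Ed).
  { intros N HN. unfold Rdiv. rewrite Rabs_mult, (Rabs_right (/ _)) by (left; apply Rinv_0_lt_compat; lra).
    assert (HN2 : Rabs N <= (C1 m * Xc m b + C1 m * Zc m A b + C0 m A * Xc m b) * M * Ed).
    { eapply Rle_trans; [apply HN|].
      replace (C1 m * E1 * (Xc m b * M + Zc m A b * M * Eg)) with (C1 m * Xc m b * M * E1 + C1 m * Zc m A b * M * (E1 * Eg)) by ring.
      rewrite HE1g.
      assert (C1 m * Xc m b * M * E1 <= C1 m * Xc m b * M * Ed).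
      { apply Rmult_le_compat_l; auto. apply Rmult_le_pos; [apply Rmult_le_pos|]; lra. }
      lra. }
    unfold Kc. apply (Rmult_le_compat_r (/ (2 * A * m))) in HN2; [|left; apply Rinv_0_lt_compat; lra].
    eapply Rle_trans; [apply HN2|]. right. field. lra. }
  pose proof (Rabs_pos (yp m A s)). pose proof (Rabs_pos (yp m A (- s))).
  pose proof (Rabs_pos (yp1 m A s)). pose proof (Rabs_pos (yp1 m A (- s))).
  pose proof (Rabs_pos (Qf m A (gopp g) Im (- s))). pose proof (Rabs_pos (Qf m A g I s)).
  assert (Hp1 : forall y, Rabs y <= C1 m * E1 -> Rabs (y * Qf m A (gopp g) Im (- s)) <= C1 m * E1 * (Xc m b * M + Zc m A b * M * Eg)).
  { intros y Hyy. rewrite Rabs_mult. apply Rmult_le_compat; auto. apply Rabs_pos. }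
  assert (Hp2 : forall y, Rabs y <= C0 m A -> Rabs (y * Qf m A g I s) <= C0 m A * (Xc m b * M * Ed)).
  { intros y Hyy. rewrite Rabs_mult. apply Rmult_le_compat; auto. apply Rabs_pos. }
  split.
  - unfold Fg. apply Hfin. eapply Rle_trans. apply Rabs_triang. apply Rplus_le_compat; auto.
  - unfold F1g. apply Hfin. unfold Rminus. eapply Rle_trans. apply Rabs_triang. rewrite Rabs_Ropp. apply Rplus_le_compat; auto.
Qed.

Lemma Fg_opp m A g I Im s : Fg m A g I Im s = Fg m A (gopp g) Im I (- s).
Proof. unfold Fg. rewrite gopp_gopp, (Ropp_involutive s). unfold Rdiv. ring. Qed.

Lemma F1g_opp m A g I Im s : F1g m A g I Im s = - F1g m A (gopp g) Im I (- s).
Proof. unfold F1g. rewrite gopp_gopp, (Ropp_involutive s). unfold Rdiv. ring. Qed.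

Lemma Kc_nonneg m A b : GoodA m A -> Goodb m b -> 0 <= Kc m A b.
Proof.
  intros HG Hb. pose proof HG as [Hm [HA _]]. destruct (delta_lt m b Hm Hb) as [Hd1 Hd2].
  pose proof (C1_pos m Hm). pose proof (C0_pos m A HG). assert (HBb : 0 < Bb b) by apply exp_pos.
  assert (HXc : 0 < Xc m b) by (unfold Xc; apply Rdiv_lt_0_compat; [apply Rmult_lt_0_compat|]; lra).
  assert (HZc : 0 < Zc m A b) by (unfold Zc; apply Rdiv_lt_0_compat; [apply Rmult_lt_0_compat|]; lra).
  unfold Kc. apply Rdiv_le_0_compat. 
  assert (0 < C1 m * Xc m b) by (apply Rmult_lt_0_compat; lra).
  assert (0 < C1 m * Zc m A b) by (apply Rmult_lt_0_compat; lra).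
  assert (0 < C0 m A * Xc m b) by (apply Rmult_lt_0_compat; lra). lra.
  apply Rmult_lt_0_compat; [apply Rmult_lt_0_compat|]; lra.
Qed.

Theorem ode_exist m b : 1 < m -> Goodb m b -> exists Kcst, 0 <= Kcst /\
  forall (g : R -> R) M, (forall x, continuous g x) -> (forall s, Rabs (g s) * cp m b s <= M) ->
  exists f f1 : R -> R, (forall s, is_derive f s (f1 s)) /\
    (forall s, is_derive f1 s (g s - aco m s * f1 s - bco m s * f s)) /\
    (forall s, Rabs (f s) * cp m b s <= Kcst * M /\ Rabs (f1 s) * cp m b s <= Kcst * M).
Proof.
  intros Hm Hb. destruct (exists_A m Hm) as [A HG]. pose proof HG as [_ [HA _]]. pose proof Hb as [Hb0 Hb1].
  destruct (delta_lt m b Hm Hb) as [Hd1 Hd2].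
  exists (Kc m A b). split. apply Kc_nonneg; auto.
  intros g M Hgc HgM.
  assert (HM : 0 <= M). { specialize (HgM 0). pose proof (Rabs_pos (g 0)). pose proof (cp_pos m b 0). nra. }
  assert (Hgb : forall r, Rabs (g r) <= M * Bb b * exp (- (b * m * Rabs r))).
  { intro r. specialize (HgM r).
    assert (Rabs (g r) = Rabs (g r) * cp m b r * cp m (- b) r).
    { rewrite Rmult_assoc, cp_plus. replace (b + - b) with 0 by ring. rewrite cp_0. ring. }
    rewrite H. pose proof (cp_pos m (- b) r).
    eapply Rle_trans. apply Rmult_le_compat_r. lra. apply HgM.
    rewrite Rmult_assoc. apply Rmult_le_compat_l. auto. unfold Bb. apply cp_neg_up; lra. }
  assert (Hgob : forall r, Rabs (gopp g r) <= M * Bb b * exp (- (b * m * Rabs r))).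
  { intro r. unfold gopp. rewrite <- (Rabs_Ropp r). apply Hgb. }
  assert (Hgoc := gopp_cont g Hgc).
  assert (tail : forall g', (forall x, continuous g' x) -> (forall r, Rabs (g' r) <= M * Bb b * exp (- (b * m * Rabs r))) ->
     exists I, forall s, 0 <= s -> Rabs (I - prim (Hg m A g') s) <= Xc m b * M * exp (- (b * m * s))).
  { intros g' Hc' Hb'. destruct (tail_lemma (prim (Hg m A g')) (Hg m A g') (C1 m * M * Bb b) (b * m)) as [I HI].
    - lra.
    - intros; apply is_derive_prim. apply Hg_cont; auto; lra.
    - intros s Hs. apply (Hg_bound_pos m A b g' M HG Hb Hb' s Hs).
    - exists I. intros s Hs. eapply Rle_trans. apply HI; auto. right. unfold Xc. field. lra. }
  destruct (tail g Hgc Hgb) as [I HI]. destruct (tail (gopp g) Hgoc Hgob) as [Im HIm].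
  exists (Fg m A g I Im), (F1g m A g I Im). split; [|split].
  - intro s. apply is_derive_Fg; auto; lra.
  - intro s. apply is_derive_F1g; auto; lra.
  - intro s.
    assert (Hw : forall t, cp m b t <= exp (b * m * Rabs t)).
    { intro t. eapply Rle_trans. apply cp_up; lra. lra. }
    assert (key : forall X, Rabs X <= Kc m A b * M * exp (- (b * m * Rabs s)) -> Rabs X * cp m b s <= Kc m A b * M).
    { intros X HX. pose proof (Rabs_pos X). pose proof (cp_pos m b s).
      eapply Rle_trans. apply Rmult_le_compat. lra. lra. apply HX. apply Hw.
      rewrite Rmult_assoc, <- exp_plus. replace (- (b * m * Rabs s) + b * m * Rabs s) with 0 by ring.
      rewrite exp_0. lra. }
    destruct (Rle_dec 0 s) as [Hs|Hs].
    + destruct (F_bound_pos m A b g M I Im HG Hb HM Hgc Hgb HI HIm s Hs) as [B1 B2].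
      split; apply key; rewrite (Rabs_right s) by lra; auto.
    + assert (HIm' : forall s, 0 <= s -> Rabs (I - prim (Hg m A (gopp (gopp g))) s) <= Xc m b * M * exp (- (b * m * s))).
      { rewrite gopp_gopp. auto. }
      destruct (F_bound_pos m A b (gopp g) M Im I HG Hb HM Hgoc Hgob HIm HIm' (- s) ltac:(lra)) as [B1 B2].
      rewrite Fg_opp, F1g_opp, Rabs_Ropp. split; apply key; rewrite (Rabs_left s) by lra; auto.
Qed.

Inductive PT (m : R) : (R -> R) -> Prop :=
| PTc (r : R) : PT m (fun _ => r)
| PTt : PT m (ta m)
| PTa (f g : R -> R) : PT m f -> PT m g -> PT m (fun s => f s + g s)
| PTm (f g : R -> R) : PT m f -> PT m g -> PT m (fun s => f s * g s)
| PTe (f g : R -> R) : (forall s, f s = g s) -> PT m f -> PT m g.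

Lemma PT_props m f : PT m f ->
  (exists B, forall s, Rabs (f s) <= B) /\ (forall s, is_derive f s (Derive f s)) /\ PT m (Derive f).
Proof.
  induction 1 as [r | | f g Hf [[Bf IHf1] [IHf2 IHf3]] Hg [[Bg IHg1] [IHg2 IHg3]]
     | f g Hf [[Bf IHf1] [IHf2 IHf3]] Hg [[Bg IHg1] [IHg2 IHg3]] | f g Hfg Hf [[Bf IHf1] [IHf2 IHf3]]].
  - split; [exists (Rabs r); intros; lra|]. split.
    + intro s. rewrite Derive_const. apply der_const.
    + apply (PTe m (fun _ => 0)). intro s. rewrite Derive_const. auto. apply PTc.
  - split; [exists 1; intros; apply ta_bound|]. split.
    + intro s. eapply der_eq; [|apply is_derive_ta]. symmetry. apply is_derive_unique. apply is_derive_ta.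
    + apply (PTe m (fun s => m * (1 + (-1) * (ta m s * ta m s)))).
      intro s. rewrite (is_derive_unique (ta m) s _ (is_derive_ta m s)). ring.
      apply PTm. apply PTc. apply PTa. apply PTc. apply PTm. apply PTc. apply PTm; apply PTt.
  - assert (Hd : forall s, is_derive (fun s => f s + g s) s (Derive f s + Derive g s)).
    { intro s. apply der_plus; auto. }
    split; [exists (Bf + Bg); intro s; eapply Rle_trans; [apply Rabs_triang| specialize (IHf1 s); specialize (IHg1 s); lra]|]. split.
    + intro s. eapply der_eq; [|apply Hd]. symmetry. apply is_derive_unique. apply Hd.
    + apply (PTe m (fun s => Derive f s + Derive g s)). intro s. symmetry. apply is_derive_unique. apply Hd.
      apply PTa; auto.
  - assert (Hd : forall s, is_derive (fun s => f s * g s) s (Derive f s * g s + f s * Derive g s)).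
    { intro s. apply der_mult; auto. }
    split.
    { exists (Rabs Bf * Rabs Bg). intro s. rewrite Rabs_mult. specialize (IHf1 s); specialize (IHg1 s).
      apply Rmult_le_compat; try apply Rabs_pos; eapply Rle_trans; eauto; apply Rle_abs. }
    split.
    + intro s. eapply der_eq; [|apply Hd]. symmetry. apply is_derive_unique. apply Hd.
    + apply (PTe m (fun s => Derive f s * g s + f s * Derive g s)). intro s. symmetry. apply is_derive_unique. apply Hd.
      apply PTa; apply PTm; auto.
  - split; [exists Bf; intro s; rewrite <- Hfg; auto|]. split.
    + intro s. rewrite <- (Derive_ext f g s Hfg). apply (der_ext f g); auto.
    + apply (PTe m (Derive f)). intro s. apply Derive_ext. auto. auto.
Qed.

Lemma PT_aco m : PT m (aco m).
Proof. apply (PTe m (fun s => (m - 1) * ta m s)). intro; reflexivity. apply PTm. apply PTc. apply PTt. Qed.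

Lemma PT_bco m : PT m (bco m).
Proof. apply (PTe m (fun s => m * (m + 1) * (1 + (-1) * (ta m s * ta m s)))). intro s; unfold bco; ring.
  apply PTm. apply PTc. apply PTa. apply PTc. apply PTm. apply PTc. apply PTm; apply PTt. Qed.

Fixpoint cc (m : R) (j i : nat) : R -> R :=
  match j with
  | O => match i with O => bco m | 1%nat => aco m | 2%nat => fun _ => 1 | _ => fun _ => 0 end
  | S j' => fun s => Derive (cc m j' i) s + match i with O => 0 | S i' => cc m j' i' s end
  end.

Lemma cc_PT m j i : PT m (cc m j i).
Proof.
  revert i. induction j as [|j IH]; intro i.
  - destruct i as [|[|[|i]]]; simpl. apply PT_bco. apply PT_aco. apply PTc. apply PTc.
  - simpl. apply PTa. apply (PT_props m _ (IH i)). destruct i. apply PTc. apply IH.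
Qed.

Lemma cc_zero m j i s : (j + 2 < i)%nat -> cc m j i s = 0.
Proof.
  revert i s. induction j as [|j IH]; intros i s Hi.
  - destruct i as [|[|[|i]]]; simpl; try lia. auto.
  - simpl. rewrite (Derive_ext _ (fun _ => 0)). rewrite Derive_const.
    destruct i. lia. rewrite IH by lia. ring. intro t. apply IH. lia.
Qed.

Lemma cc_top m j s : cc m j (j + 2) s = 1.
Proof.
  revert s. induction j as [|j IH]; intros s.
  - simpl. auto.
  - simpl. rewrite (Derive_ext _ (fun _ => 0)). rewrite Derive_const.
    rewrite (IH s). ring.
    intro t. apply cc_zero. lia.
Qed.

Lemma cc_der m j i s : is_derive (cc m j i) s (Derive (cc m j i) s).
Proof. apply (PT_props m _ (cc_PT m j i)). Qed.

Lemma cc_bounded m j i : exists B, forall s, Rabs (cc m j i s) <= B.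
Proof. apply (PT_props m _ (cc_PT m j i)). Qed.

Lemma der_sum (F F' : nat -> R -> R) N s :
  (forall i, (i <= N)%nat -> is_derive (F i) s (F' i s)) ->
  is_derive (fun s => sum_f_R0 (fun i => F i s) N) s (sum_f_R0 (fun i => F' i s) N).
Proof.
  induction N as [|N IH]; intros H.
  - simpl. apply H. lia.
  - simpl. apply der_plus. apply IH. intros; apply H; lia. apply H. lia.
Qed.

Definition Sf m j (D : nat -> R -> R) s := sum_f_R0 (fun i => cc m j i s * D i s) (S j).

Lemma sum_shift (f : nat -> R) N : sum_f_R0 f (S N) = f O + sum_f_R0 (fun i => f (S i)) N.
Proof.
  induction N as [|N IH]. simpl. ring.
  replace (sum_f_R0 f (S (S N))) with (sum_f_R0 f (S N) + f (S (S N))) by reflexivity.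
  rewrite IH. simpl. ring.
Qed.

Lemma Sf_der m j (D : nat -> R -> R) s :
  (forall i, (i <= S j)%nat -> is_derive (D i) s (D (S i) s)) ->
  is_derive (Sf m j D) s (Sf m (S j) D s).
Proof.
  intros HD. unfold Sf.
  eapply der_eq; [| apply (der_sum (fun i s => cc m j i s * D i s) (fun i s => Derive (cc m j i) s * D i s + cc m j i s * D (S i) s))].
  2:{ intros i Hi. apply der_mult. apply cc_der. apply HD; auto. }
  rewrite plus_sum. simpl (cc m (S j)).
  transitivity (sum_f_R0 (fun i => Derive (cc m j i) s * D i s) (S (S j)) +
                sum_f_R0 (fun i => match i with O => 0 | S i' => cc m j i' s end * D i s) (S (S j))).
  - f_equal.
    + replace (sum_f_R0 (fun i => Derive (cc m j i) s * D i s) (S (S j))) with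
        (sum_f_R0 (fun i => Derive (cc m j i) s * D i s) (S j) + Derive (cc m j (S (S j))) s * D (S (S j)) s) by reflexivity.
      rewrite (Derive_ext _ (fun _ => 1)). rewrite Derive_const. ring.
      intro t. replace (S (S j)) with (j + 2)%nat by lia. apply cc_top.
    + rewrite (sum_shift _ (S j)). cbv beta. rewrite Rmult_0_l, Rplus_0_l. apply sum_eq. intros; reflexivity.
  - rewrite <- plus_sum. apply sum_eq. intros i Hi. ring.
Qed.

Lemma Rsup_spec (w : R -> R) M : (forall s, w s <= M) ->
  (forall s, w s <= Rsup (fun y => exists s, y = w s)) /\ Rsup (fun y => exists s, y = w s) <= M.
Proof.
  intros HM. unfold Rsup.
  destruct (excluded_middle_informative _) as [Hl|Hn].
  - destruct (constructive_indefinite_description _ Hl) as [l [H1 H2]]. simpl. split.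
    + intro s. apply H1. exists s; auto.
    + apply H2. intros y [s ->]. auto.
  - exfalso. apply Hn. destruct (completeness (fun y => exists s, y = w s)) as [l Hl].
    exists M. intros y [s ->]. auto. exists (w 0), 0. auto. exists l; auto.
Qed.

Lemma sum_le (f g : nat -> R) N : (forall i, (i <= N)%nat -> f i <= g i) -> sum_f_R0 f N <= sum_f_R0 g N.
Proof. induction N; intros H; simpl. apply H; lia. apply Rplus_le_compat. apply IHN; intros; apply H; lia. apply H; lia. Qed.

Lemma sum_const c N : sum_f_R0 (fun _ => c) N = INR (S N) * c.
Proof. induction N. simpl. ring. simpl sum_f_R0. rewrite IHN. rewrite !S_INR. ring. Qed.

Lemma sum_nonneg (f : nat -> R) N : (forall i, (i <= N)%nat -> 0 <= f i) -> 0 <= sum_f_R0 f N.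
Proof. induction N; intros H; simpl. apply H; lia. apply Rplus_le_le_0_compat. apply IHN; intros; apply H; lia. apply H; lia. Qed.

Lemma sum_term (f : nat -> R) N a : (forall i, (i <= N)%nat -> 0 <= f i) -> (a <= N)%nat -> f a <= sum_f_R0 f N.
Proof.
  induction N; intros H Ha; simpl.
  - replace a with 0%nat by lia. lra.
  - destruct (Nat.eq_dec a (S N)). subst. pose proof (sum_nonneg f N ltac:(intros; apply H; lia)). lra.
    pose proof (IHN ltac:(intros; apply H; lia) ltac:(lia)). pose proof (H (S N) (le_n _)). lra.
Qed.

Lemma fin_bound1 (F : nat -> R -> R) N : (forall i, exists B, forall s, Rabs (F i s) <= B) ->
  exists B, 0 <= B /\ forall i s, (i <= N)%nat -> Rabs (F i s) <= B.
Proof.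
  intros H. induction N.
  - destruct (H 0%nat) as [B HB]. exists (Rabs B). split. apply Rabs_pos. intros i s Hi. replace i with 0%nat by lia.
    eapply Rle_trans. apply HB. apply Rle_abs.
  - destruct IHN as [B [HB0 HB]]. destruct (H (S N)) as [B' HB']. exists (Rmax B (Rabs B')). split.
    eapply Rle_trans; [apply HB0| apply Rmax_l].
    intros i s Hi. destruct (Nat.eq_dec i (S N)). subst. eapply Rle_trans. apply HB'. eapply Rle_trans. apply Rle_abs. apply Rmax_r.
    eapply Rle_trans. apply HB; lia. apply Rmax_l.
Qed.

Lemma cc_unif m N : exists B, 0 <= B /\ forall j i s, (j <= N)%nat -> (i <= N)%nat -> Rabs (cc m j i s) <= B.
Proof.
  destruct (fin_bound1 (fun j s => 0) N) as [_ _]. intros; exists 0; intros; rewrite Rabs_R0; lra.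
  assert (H1 : forall j, exists B, 0 <= B /\ forall i s, (i <= N)%nat -> Rabs (cc m j i s) <= B).
  { intro j. apply fin_bound1. intro i. apply cc_bounded. }
  assert (H2 : forall N', exists B, 0 <= B /\ forall j i s, (j <= N')%nat -> (i <= N)%nat -> Rabs (cc m j i s) <= B).
  { induction N'.
    - destruct (H1 0%nat) as [B [HB0 HB]]. exists B. split; auto. intros j i s Hj Hi. replace j with 0%nat by lia. auto.
    - destruct IHN' as [B [HB0 HB]]. destruct (H1 (S N')) as [B' [HB0' HB']]. exists (Rmax B B'). split.
      eapply Rle_trans; [apply HB0| apply Rmax_l].
      intros j i s Hj Hi. destruct (Nat.eq_dec j (S N')). subst. eapply Rle_trans. apply HB'; auto. apply Rmax_r.
      eapply Rle_trans. apply HB; auto; lia. apply Rmax_l. }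
  apply H2.
Qed.

Lemma phi_cp n s : phi n s = cp (INR n - 1) (1 / (INR n - 1)) s.
Proof. reflexivity. Qed.

Lemma wval_eq n q D a s : 1 < INR n - 1 ->
  wval n q D a s = Rabs (D a s) * cp (INR n - 1) (- q / (INR n - 1)) s.
Proof.
  intros Hm. unfold wval. rewrite phi_cp. unfold cp. rewrite Rpower_mult. f_equal. f_equal. field. lra.
Qed.

Lemma phid_eq n phid : 1 < INR n - 1 -> (forall s, derivable_pt_lim (phi n) s (phid s)) ->
  forall s, phid s / phi n s = ta (INR n - 1) s.
Proof.
  intros Hm Hp s. set (m := INR n - 1) in *.
  assert (H1 : is_derive (phi n) s (phid s)) by (apply is_derive_Reals; auto).
  assert (H2 : is_derive (phi n) s (1 / m * m * ta m s * cp m (1 / m) s)).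
  { eapply der_ext; [|apply (is_derive_cp m (1/m) s)]. intro; rewrite phi_cp; reflexivity. }
  rewrite (der_unique _ _ _ _ H1 H2). rewrite phi_cp. fold m.
  assert (cp m (1/m) s <> 0) by (pose proof (cp_pos m (1/m) s); lra). assert (m <> 0) by lra. field; auto.
Qed.

Lemma phi_pow n s : (3 <= n)%nat -> phi n s ^ (2 * n - 2) = cosh ((INR n - 1) * s) ^ 2.
Proof.
  intros Hn. rewrite phi_cp. set (m := INR n - 1).
  rewrite <- Rpower_pow by apply cp_pos. unfold cp. rewrite Rpower_mult.
  replace (1 / m * INR (2 * n - 2)) with (INR 2).
  rewrite Rpower_pow by apply cosh_pos. auto.
  rewrite minus_INR by lia. rewrite mult_INR. unfold m. simpl. assert (3 <= INR n) by (replace 3 with (INR 3) by (simpl; ring); apply le_INR; lia).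
  field. lra.
Qed.

Lemma T0_eq n phid D s : (3 <= n)%nat -> (forall s, derivable_pt_lim (phi n) s (phid s)) ->
  T0 n phid D s = D 2%nat s + aco (INR n - 1) s * D 1%nat s + bco (INR n - 1) s * D 0%nat s.
Proof.
  intros Hn Hp. assert (H3 : 3 <= INR n) by (replace 3 with (INR 3) by (simpl; ring); apply le_INR; lia).
  unfold T0. rewrite (phid_eq n phid) by (auto; lra). rewrite phi_pow by auto.
  unfold aco, bco. pose proof (ta_sq (INR n - 1) s).
  set (m := INR n - 1) in *. set (t := ta m s) in *. set (c := cosh (m * s)) in *.
  assert (0 < c) by apply cosh_pos.
  rewrite H. replace (INR n) with (m + 1) by (unfold m; ring). field. lra.
Qed.

Lemma E_rep m k (f : R -> R) (D E : nat -> R -> R) : (2 <= k)%nat -> Ck_tower k f D ->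
  (forall s, E 0%nat s = D 2%nat s + aco m s * D 1%nat s + bco m s * D 0%nat s) ->
  (forall a, (a < k - 2)%nat -> forall s, derivable_pt_lim (E a) s (E (S a) s)) ->
  forall j, (j <= k - 2)%nat -> forall s, E j s = D (S (S j)) s + Sf m j D s.
Proof.
  intros Hk [HD0 [HD1 HD2]] HE0 HE j. induction j as [|j IH]; intros Hj s.
  - rewrite HE0. unfold Sf. simpl. ring.
  - assert (H1 : is_derive (E j) s (E (S j) s)) by (apply is_derive_Reals; apply HE; lia).
    assert (H2 : is_derive (E j) s (D (S (S (S j))) s + Sf m (S j) D s)).
    { apply (der_ext (fun s => D (S (S j)) s + Sf m j D s)). intro t. rewrite IH; auto; lia.
      apply der_plus. apply is_derive_Reals. apply HD1. lia.
      apply Sf_der. intros i Hi. apply is_derive_Reals. apply HD1. lia. }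
    apply (der_unique _ _ _ _ H1 H2).
Qed.

Lemma Sf_abs m j (D : nat -> R -> R) s W Bc : 0 <= W ->
  (forall i, (i <= S j)%nat -> Rabs (cc m j i s) <= Bc) ->
  Rabs (Sf m j D s) * W <= sum_f_R0 (fun i => Bc * (Rabs (D i s) * W)) (S j).
Proof.
  intros HW HB. unfold Sf. eapply Rle_trans. apply Rmult_le_compat_r. auto. apply sum_f_R0_triangle.
  rewrite Rmult_comm, scal_sum. apply sum_le. intros i Hi. rewrite Rabs_mult.
  pose proof (HB i Hi). pose proof (Rabs_pos (D i s)). pose proof (Rabs_pos (cc m j i s)).
  assert (Rabs (cc m j i s) * Rabs (D i s) <= Bc * Rabs (D i s)) by (apply Rmult_le_compat_r; auto). nra.
Qed.

Lemma prop_bound (m b : R) k Bc : 0 <= Bc ->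
  (forall j i s, (j <= k)%nat -> (i <= k)%nat -> Rabs (cc m j i s) <= Bc) ->
  forall a, exists L, 0 <= L /\ forall (D E : nat -> R -> R) X, 0 <= X ->
    (forall s, Rabs (D 0%nat s) * cp m b s <= X) -> (forall s, Rabs (D 1%nat s) * cp m b s <= X) ->
    (forall j s, (j + 2 <= k)%nat -> Rabs (E j s) * cp m b s <= X) ->
    (forall j s, (j + 2 <= k)%nat -> D (S (S j)) s = E j s - Sf m j D s) ->
    forall c s, (c <= a)%nat -> (c <= k)%nat -> Rabs (D c s) * cp m b s <= L * X.
Proof.
  intros HBc HB a. induction a as [|a [L [HL0 IH]]].
  - exists 1. split. lra. intros D E X HX H0 H1 HE HD c s Hc Hck. replace c with 0%nat by lia. rewrite Rmult_1_l. auto.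
  - exists (Rmax (Rmax L 1) (1 + INR (S k) * Bc * L)). split.
    { eapply Rle_trans; [|apply Rmax_l]. eapply Rle_trans; [|apply Rmax_r]. lra. }
    intros D E X HX H0 H1 HE HD c s Hc Hck.
    assert (HLL : L <= Rmax (Rmax L 1) (1 + INR (S k) * Bc * L)) by (eapply Rle_trans; [apply Rmax_l| apply Rmax_l]).
    assert (HL1 : 1 <= Rmax (Rmax L 1) (1 + INR (S k) * Bc * L)) by (eapply Rle_trans; [apply Rmax_r| apply Rmax_l]).
    assert (HL2 : 1 + INR (S k) * Bc * L <= Rmax (Rmax L 1) (1 + INR (S k) * Bc * L)) by apply Rmax_r.
    destruct (Nat.eq_dec c (S a)) as [->|Hne].
    2:{ eapply Rle_trans. apply (IH D E X); auto; lia. apply Rmult_le_compat_r; auto. }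
    destruct a as [|j].
    { eapply Rle_trans. apply H1. nra. }
    rewrite HD by lia. pose proof (cp_pos m b s) as Hcp.
    assert (Hs : Rabs (Sf m j D s) * cp m b s <= INR (S (S j)) * Bc * L * X).
    { eapply Rle_trans. apply Sf_abs. lra. intros i Hi. apply HB; lia.
      replace (INR (S (S j)) * Bc * L * X) with (sum_f_R0 (fun _ => Bc * (L * X)) (S j)).
      2:{ rewrite sum_const. ring. }
      apply sum_le. intros i Hi. apply Rmult_le_compat_l; auto. apply (IH D E X); auto; lia. }
    assert (HEj : Rabs (E j s) * cp m b s <= X) by (apply HE; lia).
    assert (INR (S (S j)) <= INR (S k)) by (apply le_INR; lia).
    assert (INR (S (S j)) * Bc * L * X <= INR (S k) * Bc * L * X).
    { repeat apply Rmult_le_compat_r; auto. }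
    unfold Rminus. eapply Rle_trans. apply Rmult_le_compat_r. lra. apply Rabs_triang. rewrite Rabs_Ropp.
    eapply Rle_trans with (X + INR (S k) * Bc * L * X). lra.
    replace (X + INR (S k) * Bc * L * X) with ((1 + INR (S k) * Bc * L) * X) by ring.
    apply Rmult_le_compat_r; auto.
Qed.

Lemma wn_bound n K q D : finite_wnorm n K q D -> forall a, (a <= K)%nat -> forall s, wval n q D a s <= wnorm n K q D.
Proof.
  intros HF a Ha s. unfold wnorm.
  assert (Hsp : forall a, (a <= K)%nat ->
     (forall s, wval n q D a s <= Rsup (fun y => exists s, y = wval n q D a s))).
  { intros a' Ha'. destruct (HF a' Ha') as [M HM]. apply (Rsup_spec _ M HM). }
  eapply Rle_trans. apply Hsp; auto.
  apply (sum_term (fun a => Rsup (fun y => exists s, y = wval n q D a s))); auto.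
  intros i Hi. eapply Rle_trans; [|apply (Hsp i Hi 0)]. unfold wval.
  apply Rmult_le_pos. apply Rabs_pos. unfold Rpower. left; apply exp_pos.
Qed.

Lemma wn_le n K q D X : (forall a s, (a <= K)%nat -> wval n q D a s <= X) -> wnorm n K q D <= INR (S K) * X.
Proof.
  intros H. unfold wnorm. rewrite <- sum_const. apply sum_le. intros i Hi.
  apply (Rsup_spec (fun s => wval n q D i s) X). intro s; auto.
Qed.

Lemma wn_nonneg n K q D : finite_wnorm n K q D -> 0 <= wnorm n K q D.
Proof.
  intros HF. eapply Rle_trans; [|apply (wn_bound n K q D HF 0%nat ltac:(lia) 0)].
  unfold wval. apply Rmult_le_pos. apply Rabs_pos. unfold Rpower. left; apply exp_pos.
Qed.

Lemma decay_of m b (h : R -> R) Z : 0 < m -> 0 < b -> (forall s, Rabs (h s) * cp m b s <= Z) ->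
  forall e, 0 < e -> exists S, forall s, S <= Rabs s -> Rabs (h s) <= e.
Proof.
  intros Hm Hb HZ e He.
  assert (HZ0 : 0 <= Z) by (specialize (HZ 0); pose proof (Rabs_pos (h 0)); pose proof (cp_pos m b 0);
    assert (0 <= Rabs (h 0) * cp m b 0) by (apply Rmult_le_pos; lra); lra).
  destruct (ev_cp m b Hm Hb (e / (Z + 1))) as [S HS]. apply Rdiv_lt_0_compat; lra.
  exists S. intros s Hs. specialize (HS s Hs). specialize (HZ s).
  assert (Rabs (h s) = Rabs (h s) * cp m b s * cp m (- b) s).
  { rewrite Rmult_assoc, cp_plus. replace (b + - b) with 0 by ring. rewrite cp_0. ring. }
  rewrite H. pose proof (cp_pos m (- b) s).
  eapply Rle_trans. apply Rmult_le_compat_r. lra. apply HZ.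
  eapply Rle_trans. apply Rmult_le_compat_l. lra. apply HS.
  apply (Rmult_le_reg_r (Z + 1)). lra. unfold Rdiv. rewrite Rmult_assoc, Rmult_assoc, Rinv_l by lra. nra.
Qed.

Lemma cc_cont m j i : continuity (cc m j i).
Proof. intro s. apply cont_to_pt. eapply der_cont. apply cc_der. Qed.

Lemma Sf_cont m j (D : nat -> R -> R) : (forall i, (i <= S j)%nat -> continuity (D i)) -> continuity (Sf m j D).
Proof.
  intros H. unfold Sf.
  assert (forall N, (N <= S j)%nat -> continuity (fun s => sum_f_R0 (fun i => cc m j i s * D i s) N)).
  { induction N; intros HN; simpl.
    - apply continuity_mult. apply cc_cont. apply H; lia.
    - apply continuity_plus. apply IHN; lia. apply continuity_mult. apply cc_cont. apply H; lia. }
  apply H0. lia.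
Qed.

Lemma Sf_ext m j (D D' : nat -> R -> R) s : (forall i, (i <= S j)%nat -> D i s = D' i s) -> Sf m j D s = Sf m j D' s.
Proof. intros H. unfold Sf. apply sum_eq. intros i Hi. rewrite H; auto. Qed.

Lemma tower_cont0 K (g : R -> R) (E : nat -> R -> R) : Ck_tower K g E -> continuity (E 0%nat).
Proof.
  intros [H0 [H1 H2]]. destruct K. auto.
  intro s. apply derivable_continuous_pt. exists (E 1%nat s). apply H1. lia.
Qed.

Lemma tower_cont K (g : R -> R) (E : nat -> R -> R) : Ck_tower K g E -> forall a, (a <= K)%nat -> continuity (E a).
Proof.
  intros [H0 [H1 H2]] a Ha. destruct (Nat.eq_dec a K). subst; auto.
  intro s. apply derivable_continuous_pt. exists (E (S a) s). apply H1. lia.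
Qed.

Fixpoint Dt (m : R) (f0 f01 : R -> R) (E : nat -> R -> R) (N : nat) : nat -> R -> R :=
  match N with
  | O => fun a => match a with O => f0 | 1%nat => f01 | _ => fun _ => 0 end
  | S N' => fun a => if Nat.eqb a (S (S N')) then (fun s => E N' s - Sf m N' (Dt m f0 f01 E N') s)
                     else Dt m f0 f01 E N' a
  end.

Lemma Dt_stable m f0 f01 E N M a : (N <= M)%nat -> (a <= S N)%nat -> Dt m f0 f01 E M a = Dt m f0 f01 E N a.
Proof.
  intros HNM Ha. induction M as [|M IH].
  - replace N with 0%nat by lia. auto.
  - destruct (Nat.eq_dec N (S M)). subst. auto.
    simpl. destruct (Nat.eqb_spec a (S (S M))). lia. apply IH. lia.
Qed.

Lemma Dt_rec m f0 f01 E k j s : (j < k)%nat ->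
  Dt m f0 f01 E k (S (S j)) s = E j s - Sf m j (Dt m f0 f01 E k) s.
Proof.
  intros Hj. rewrite (Dt_stable m f0 f01 E (S j) k) by lia. simpl. rewrite Nat.eqb_refl.
  f_equal. apply Sf_ext. intros i Hi. rewrite (Dt_stable m f0 f01 E j k) by lia. auto.
Qed.

Lemma Dt_0 m f0 f01 E k : Dt m f0 f01 E k 0%nat = f0.
Proof. rewrite (Dt_stable m f0 f01 E 0 k) by lia. auto. Qed.

Lemma Dt_1 m f0 f01 E k : Dt m f0 f01 E k 1%nat = f01.
Proof. rewrite (Dt_stable m f0 f01 E 0 k) by lia. auto. Qed.

Lemma Erep_bound m b k Bc (D : nat -> R -> R) N j s :
  (forall j i s, (j <= k)%nat -> (i <= k)%nat -> Rabs (cc m j i s) <= Bc) -> 0 <= Bc ->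
  (forall a s, (a <= k)%nat -> Rabs (D a s) * cp m b s <= N) -> 0 <= N -> (j + 2 <= k)%nat ->
  Rabs (D (S (S j)) s + Sf m j D s) * cp m b s <= (1 + INR (S k) * Bc) * N.
Proof.
  intros HB HBc HD HN Hj. pose proof (cp_pos m b s).
  eapply Rle_trans. apply Rmult_le_compat_r. lra. apply Rabs_triang. rewrite Rmult_plus_distr_r.
  assert (H1 : Rabs (D (S (S j)) s) * cp m b s <= N) by (apply HD; lia).
  assert (H2 : Rabs (Sf m j D s) * cp m b s <= INR (S (S j)) * Bc * N).
  { eapply Rle_trans. apply Sf_abs. lra. intros i Hi. apply HB; lia.
    replace (INR (S (S j)) * Bc * N) with (sum_f_R0 (fun _ => Bc * N) (S j)) by (rewrite sum_const; ring).
    apply sum_le. intros i Hi. apply Rmult_le_compat_l; auto. apply HD. lia. }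
  assert (INR (S (S j)) <= INR (S k)) by (apply le_INR; lia).
  assert (INR (S (S j)) * Bc * N <= INR (S k) * Bc * N) by (repeat apply Rmult_le_compat_r; auto).
  lra.
Qed.

Lemma setup n q : (3 <= n)%nat -> - (INR n - 2) < q -> q < 0 ->
  1 < INR n - 1 /\ Goodb (INR n - 1) (- q / (INR n - 1)).
Proof.
  intros Hn Hq1 Hq2. assert (H3 : 3 <= INR n) by (replace 3 with (INR 3) by (simpl; ring); apply le_INR; lia).
  split. lra. split. apply Rdiv_lt_0_compat; lra. unfold pp. apply Rmult_lt_compat_r. apply Rinv_0_lt_compat; lra. lra.
Qed.

Lemma part1 n k q phid : (3 <= n)%nat -> (2 <= k)%nat -> - (INR n - 2) < q -> q < 0 ->
  (forall s, derivable_pt_lim (phi n) s (phid s)) ->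
  exists C : R, 0 <= C /\
     forall (f : R -> R) (D : nat -> R -> R), in_Ckq n k q f D ->
       (exists E, in_Ckq n (k - 2) q (T0 n phid D) E) /\
       (forall E, Ck_tower (k - 2) (T0 n phid D) E ->
          wnorm n (k - 2) q E <= C * wnorm n k q D).
Proof.
  intros Hn Hk Hq1 Hq2 Hphid. destruct (setup n q Hn Hq1 Hq2) as [Hm Hb].
  destruct (cc_unif (INR n - 1) k) as [Bc [HBc0 HBc]].
  exists (INR (S (k - 2)) * (1 + INR (S k) * Bc)). split.
  { apply Rmult_le_pos. apply pos_INR. pose proof (pos_INR (S k)). nra. }
  intros f D [Htw Hfin].
  pose proof (wn_nonneg n k q D Hfin) as HN0.
  assert (HDb : forall a s, (a <= k)%nat -> Rabs (D a s) * cp (INR n - 1) (- q / (INR n - 1)) s <= wnorm n k q D).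
  { intros a s Ha. rewrite <- wval_eq by auto. apply wn_bound; auto. }
  assert (HEb : forall j s, (j + 2 <= k)%nat ->
     Rabs (D (S (S j)) s + Sf (INR n - 1) j D s) * cp (INR n - 1) (- q / (INR n - 1)) s <= (1 + INR (S k) * Bc) * wnorm n k q D).
  { intros j s Hj. apply Erep_bound; auto. }
  pose proof Htw as [HD0 [HD1 HD2]].
  split.
  - exists (fun j s => D (S (S j)) s + Sf (INR n - 1) j D s). split; [split; [|split]|].
    + intro s. rewrite T0_eq by auto. unfold Sf. simpl. ring.
    + intros a Ha s. apply is_derive_Reals. apply der_plus. apply is_derive_Reals, HD1; lia.
      apply Sf_der. intros i Hi. apply is_derive_Reals, HD1. lia.
    + replace (S (S (k - 2))) with k by lia. apply continuity_plus. auto. apply Sf_cont.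
      intros i Hi s. apply derivable_continuous_pt. exists (D (S i) s). apply HD1. lia.
    + intros a Ha. exists ((1 + INR (S k) * Bc) * wnorm n k q D). intro s. rewrite wval_eq by auto. apply HEb; lia.
  - intros E HE.
    assert (Hrep : forall j, (j <= k - 2)%nat -> forall s, E j s = D (S (S j)) s + Sf (INR n - 1) j D s).
    { apply (E_rep (INR n - 1) k f D E Hk Htw).
      - intro s. destruct HE as [HE0 _]. rewrite HE0. apply T0_eq; auto.
      - destruct HE as [_ [HE1 _]]. auto. }
    eapply Rle_trans. apply wn_le with (X := (1 + INR (S k) * Bc) * wnorm n k q D).
    intros a s Ha. rewrite wval_eq by auto. rewrite Hrep by auto. apply HEb; lia.
    right. ring.
Qed.

Lemma part3 n k q phid : (3 <= n)%nat -> (2 <= k)%nat -> - (INR n - 2) < q -> q < 0 ->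
  (forall s, derivable_pt_lim (phi n) s (phid s)) ->
  (forall (f1 f2 : R -> R) (D1 D2 : nat -> R -> R),
     in_Ckq n k q f1 D1 -> in_Ckq n k q f2 D2 ->
     (forall s, T0 n phid D1 s = T0 n phid D2 s) ->
     forall s, f1 s = f2 s).
Proof.
  intros Hn Hk Hq1 Hq2 Hphid. destruct (setup n q Hn Hq1 Hq2) as [Hm Hb].
  intros f1 f2 D1 D2 [[H10 [H11 H12]] HF1] [[H20 [H21 H22]] HF2] HT s.
  set (m := INR n - 1) in *. set (b := - q / m) in *.
  assert (Hz : forall s, D1 0%nat s - D2 0%nat s = 0).
  { apply (kernel_zero m (fun s => D1 0%nat s - D2 0%nat s) (fun s => D1 1%nat s - D2 1%nat s)); auto.
    - intro t. apply der_minus; apply is_derive_Reals; [apply H11| apply H21]; lia.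
    - intro t. specialize (HT t). rewrite !T0_eq in HT by auto.
      eapply der_eq; [| apply der_minus; apply is_derive_Reals; [apply H11| apply H21]; lia].
      fold m in HT. lra.
    - apply (decay_of m b _ (wnorm n k q D1 + wnorm n k q D2)). lra. destruct Hb; lra.
      intro t. pose proof (wn_bound n k q D1 HF1 0 ltac:(lia) t). pose proof (wn_bound n k q D2 HF2 0 ltac:(lia) t).
      rewrite wval_eq in H, H0 by auto. fold m b in H, H0. pose proof (cp_pos m b t).
      assert (Rabs (D1 0%nat t - D2 0%nat t) <= Rabs (D1 0%nat t) + Rabs (D2 0%nat t)).
      { unfold Rminus. eapply Rle_trans; [apply Rabs_triang| rewrite Rabs_Ropp; lra]. }
      eapply Rle_trans. apply Rmult_le_compat_r. lra. apply H2. rewrite Rmult_plus_distr_r. lra. }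
  rewrite <- H10, <- H20. specialize (Hz s). lra.
Qed.

Lemma part4 n k q phid : (3 <= n)%nat -> (2 <= k)%nat -> - (INR n - 2) < q -> q < 0 ->
  (forall s, derivable_pt_lim (phi n) s (phid s)) ->
  (exists C' : R, 0 <= C' /\
     forall (f : R -> R) (D : nat -> R -> R), in_Ckq n k q f D ->
       forall E, Ck_tower (k - 2) (T0 n phid D) E ->
         wnorm n k q D <= C' * wnorm n (k - 2) q E).
Proof.
  intros Hn Hk Hq1 Hq2 Hphid. destruct (setup n q Hn Hq1 Hq2) as [Hm Hb].
  set (m := INR n - 1) in *. set (b := - q / m) in *.
  destruct (cc_unif m k) as [Bc [HBc0 HBc]].
  destruct (ode_exist m b Hm Hb) as [Kcst [HK0 Hode]].
  destruct (prop_bound m b k Bc HBc0 HBc k) as [L [HL0 HL]].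
  exists (INR (S k) * (L * (Kcst + 1))). split.
  { apply Rmult_le_pos. apply pos_INR. apply Rmult_le_pos; lra. }
  intros f D [Htw Hfin] E HE. pose proof Htw as [HD0 [HD1 HD2]].
  pose proof (wn_nonneg n k q D Hfin) as HN0.
  assert (HDb : forall a s, (a <= k)%nat -> Rabs (D a s) * cp m b s <= wnorm n k q D).
  { intros a s Ha. unfold b, m. rewrite <- wval_eq by auto. apply wn_bound; auto. }
  assert (Hrep : forall j, (j <= k - 2)%nat -> forall s, E j s = D (S (S j)) s + Sf m j D s).
  { apply (E_rep m k f D E Hk Htw).
    - intro s. destruct HE as [HE0 _]. rewrite HE0. apply T0_eq; auto.
    - destruct HE as [_ [HE1 _]]. auto. }
  assert (HEfin : finite_wnorm n (k - 2) q E).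
  { intros a Ha. exists ((1 + INR (S k) * Bc) * wnorm n k q D). intro s. rewrite wval_eq by auto.
    fold m b. rewrite Hrep by auto. apply Erep_bound; auto. lia. }
  set (Nw := wnorm n (k - 2) q E).
  assert (HNw : 0 <= Nw) by (apply wn_nonneg; auto).
  assert (HEb : forall j s, (j <= k - 2)%nat -> Rabs (E j s) * cp m b s <= Nw).
  { intros j s Hj. unfold b, m. rewrite <- wval_eq by auto. apply wn_bound; auto. }
  assert (Hgc : forall x, continuous (E 0%nat) x).
  { intro x. apply pt_to_cont. apply (tower_cont0 (k - 2) (T0 n phid D) E HE). }
  destruct (Hode (E 0%nat) Nw Hgc (fun s => HEb 0%nat s ltac:(lia))) as [f0 [f01 [Hf0 [Hf01 Hfb]]]].
  assert (HgT : forall s, E 0%nat s = D 2%nat s + aco m s * D 1%nat s + bco m s * D 0%nat s).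
  { intro s. destruct HE as [HE0 _]. rewrite HE0. apply T0_eq; auto. }
  assert (Hz : forall s, D 0%nat s - f0 s = 0).
  { apply (kernel_zero m (fun s => D 0%nat s - f0 s) (fun s => D 1%nat s - f01 s)); auto.
    - intro t. apply der_minus; auto. apply is_derive_Reals, HD1; lia.
    - intro t. eapply der_eq; [| apply der_minus; [apply is_derive_Reals, HD1; lia | apply Hf01]].
      rewrite HgT. ring.
    - apply (decay_of m b _ (wnorm n k q D + Kcst * Nw)). lra. destruct Hb; lra.
      intro t. pose proof (HDb 0%nat t ltac:(lia)). destruct (Hfb t) as [Hb1 _]. pose proof (cp_pos m b t).
      assert (Rabs (D 0%nat t - f0 t) <= Rabs (D 0%nat t) + Rabs (f0 t)).
      { unfold Rminus. eapply Rle_trans; [apply Rabs_triang| rewrite Rabs_Ropp; lra]. }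
      eapply Rle_trans. apply Rmult_le_compat_r. lra. apply H1. rewrite Rmult_plus_distr_r. lra. }
  assert (Hz1 : forall s, D 1%nat s = f01 s).
  { intro s. apply (der_unique (D 0%nat) s). apply is_derive_Reals, HD1; lia.
    apply (der_ext f0). intro t. specialize (Hz t). lra. auto. }
  assert (HX : 0 <= Kcst * Nw + Nw) by (apply Rplus_le_le_0_compat; [apply Rmult_le_pos|]; lra).
  assert (HKN : 0 <= Kcst * Nw) by (apply Rmult_le_pos; lra).
  assert (Hfin2 : forall c s, (c <= k)%nat -> Rabs (D c s) * cp m b s <= L * (Kcst * Nw + Nw)).
  { intros c s Hc. apply (HL D E (Kcst * Nw + Nw)); auto.
    - intro t. replace (D 0%nat t) with (f0 t) by (specialize (Hz t); lra). destruct (Hfb t); lra.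
    - intro t. rewrite Hz1. destruct (Hfb t); lra.
    - intros j t Hj. specialize (HEb j t ltac:(lia)). lra.
    - intros j t Hj. rewrite Hrep by lia. ring. }
  eapply Rle_trans. apply wn_le with (X := L * (Kcst * Nw + Nw)).
  intros a s Ha. rewrite wval_eq by auto. fold m b. apply Hfin2; auto.
  right. fold Nw. ring.
Qed.

Lemma Sf0 m (D : nat -> R -> R) s : Sf m 0 D s = bco m s * D 0%nat s + aco m s * D 1%nat s.
Proof. unfold Sf. simpl. ring. Qed.

Lemma part2 n k q phid : (3 <= n)%nat -> (2 <= k)%nat -> - (INR n - 2) < q -> q < 0 ->
  (forall s, derivable_pt_lim (phi n) s (phid s)) ->
  (forall (g : R -> R) (E : nat -> R -> R), in_Ckq n (k - 2) q g E ->
     exists (f : R -> R) (D : nat -> R -> R),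
       in_Ckq n k q f D /\ forall s, T0 n phid D s = g s).
Proof.
  intros Hn Hk Hq1 Hq2 Hphid. destruct (setup n q Hn Hq1 Hq2) as [Hm Hb].
  set (m := INR n - 1) in *. set (b := - q / m) in *.
  destruct (cc_unif m k) as [Bc [HBc0 HBc]].
  destruct (ode_exist m b Hm Hb) as [Kcst [HK0 Hode]].
  destruct (prop_bound m b k Bc HBc0 HBc k) as [L [HL0 HL]].
  intros g E [HEt HEf]. pose proof HEt as [HE0 [HE1 HE2]].
  set (Nw := wnorm n (k - 2) q E).
  assert (HNw : 0 <= Nw) by (apply wn_nonneg; auto).
  assert (HEb : forall j s, (j <= k - 2)%nat -> Rabs (E j s) * cp m b s <= Nw).
  { intros j s Hj. unfold b, m. rewrite <- wval_eq by auto. apply wn_bound; auto. }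
  assert (Hgc : forall x, continuous (E 0%nat) x).
  { intro x. apply pt_to_cont. apply (tower_cont0 (k - 2) g E HEt). }
  destruct (Hode (E 0%nat) Nw Hgc (fun s => HEb 0%nat s ltac:(lia))) as [f0 [f01 [Hf0 [Hf01 Hfb]]]].
  set (D := Dt m f0 f01 E k).
  assert (HD0 : forall s, D 0%nat s = f0 s) by (intro; unfold D; rewrite Dt_0; auto).
  assert (HD1 : forall s, D 1%nat s = f01 s) by (intro; unfold D; rewrite Dt_1; auto).
  assert (HDr : forall j s, (j < k)%nat -> D (S (S j)) s = E j s - Sf m j D s).
  { intros j s Hj. unfold D. apply Dt_rec. auto. }
  assert (Hder : forall a c s, (c <= a)%nat -> (c < k)%nat -> is_derive (D c) s (D (S c) s)).
  { induction a as [|a IH]; intros c s Hc Hck.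
    - replace c with 0%nat by lia. apply (der_ext f0). intro; rewrite HD0; auto. rewrite HD1. auto.
    - destruct (Nat.eq_dec c (S a)); [|apply IH; lia]. subst c.
      destruct a as [|j].
      + apply (der_ext f01). intro; rewrite HD1; auto. rewrite HDr by lia.
        eapply der_eq; [|apply Hf01]. rewrite Sf0, HD0, HD1. ring.
      + apply (der_ext (fun s => E j s - Sf m j D s)). intro t. rewrite HDr by lia. auto.
        rewrite HDr by lia. apply der_minus. apply is_derive_Reals. apply HE1. lia.
        apply Sf_der. intros i Hi. apply IH; lia. }
  assert (HX : 0 <= Kcst * Nw + Nw) by (apply Rplus_le_le_0_compat; [apply Rmult_le_pos|]; lra).
  assert (Hfin2 : forall c s, (c <= k)%nat -> Rabs (D c s) * cp m b s <= L * (Kcst * Nw + Nw)).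
  { intros c s Hc. apply (HL D E (Kcst * Nw + Nw)); auto.
    - intro t. rewrite HD0. destruct (Hfb t). assert (0 <= Kcst * Nw) by (apply Rmult_le_pos; lra). lra.
    - intro t. rewrite HD1. destruct (Hfb t). assert (0 <= Kcst * Nw) by (apply Rmult_le_pos; lra). lra.
    - intros j t Hj. specialize (HEb j t ltac:(lia)). assert (0 <= Kcst * Nw) by (apply Rmult_le_pos; lra). lra.
    - intros j t Hj. apply HDr. lia. }
  exists f0, D. split; [split; [split; [|split]|]|].
  - auto.
  - intros a Ha s. apply is_derive_Reals. apply (Hder a); auto.
  - intro s. apply (continuity_pt_ext (fun s => E (k - 2)%nat s - Sf m (k - 2) D s)).
    intro t. replace k with (S (S (k - 2))) at 3 by lia. rewrite HDr by lia. auto.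
    apply continuity_minus. auto. apply Sf_cont. intros i Hi t. apply derivable_continuous_pt.
    exists (D (S i) t). apply is_derive_Reals. apply (Hder i); lia.
  - intros a Ha. exists (L * (Kcst * Nw + Nw)). intro s. rewrite wval_eq by auto. fold m b. apply Hfin2; auto.
  - intro s. rewrite T0_eq by auto. fold m. rewrite HDr by lia. rewrite Sf0. rewrite HE0. ring.
Qed.

Theorem lemma4p3 (n k : nat) (q : R) (phid : R -> R)
  (Hn : (3 <= n)%nat) (Hk : (2 <= k)%nat)
  (Hq1 : - (INR n - 2) < q) (Hq2 : q < 0)
  (Hphid : forall s, derivable_pt_lim (phi n) s (phid s)) :
  (* T_0 maps C^k_q into C^{k-2}_q and is bounded *)
  (exists C : R, 0 <= C /\
     forall (f : R -> R) (D : nat -> R -> R), in_Ckq n k q f D ->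
       (exists E, in_Ckq n (k - 2) q (T0 n phid D) E) /\
       (forall E, Ck_tower (k - 2) (T0 n phid D) E ->
          wnorm n (k - 2) q E <= C * wnorm n k q D)) /\
  (* surjective onto C^{k-2}_q *)
  (forall (g : R -> R) (E : nat -> R -> R), in_Ckq n (k - 2) q g E ->
     exists (f : R -> R) (D : nat -> R -> R),
       in_Ckq n k q f D /\ forall s, T0 n phid D s = g s) /\
  (* injective *)
  (forall (f1 f2 : R -> R) (D1 D2 : nat -> R -> R),
     in_Ckq n k q f1 D1 -> in_Ckq n k q f2 D2 ->
     (forall s, T0 n phid D1 s = T0 n phid D2 s) ->
     forall s, f1 s = f2 s) /\
  (* the inverse is bounded *)
  (exists C' : R, 0 <= C' /\
     forall (f : R -> R) (D : nat -> R -> R), in_Ckq n k q f D ->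
       forall E, Ck_tower (k - 2) (T0 n phid D) E ->
         wnorm n k q D <= C' * wnorm n (k - 2) q E).
Proof.
  split; [apply part1 | split; [apply part2 | split; [apply part3 | apply part4]]]; auto.
Qed.
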